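(* Let $k\ge2$, $m\ge1$, $N_1=n-mk\ge0$, $N_2=m$; let $\eta_1\in\mathbb C$ with $\hbar=k\eta_1$, $t_1=e^{\eta_1/2}$ (so $q=t_1^k$). Let $S_0=\bigsqcup_{\ell=1}^{N_2}\{e_{N_1+k(\ell-1)+j}-e_{N_1+k(\ell-1)+j+1}:1\le j\le k-1\}$, $\mathcal D_0=\{x: x_j-x_{j+1}=\eta_1$ whenever $e_j-e_{j+1}\in S_0\}$, with coordinates $x_1,\dots,x_{N_1}$ and $y_\ell=\frac1k\sum_{s=0}^{k-1}x_{N_1+k\ell-s}$. Then the restriction of the Koornwinder operator $M_{-e_1}$ to $\mathcal D_0$ is well defined and $$\overline{M_{-e_1}}=(t_0t_n)^{-1}\mathcal M_{N_1,N_2}+\kappa_t,$$ where $\mathcal M_{N_1,N_2}$ is the generalized Koornwinder operator with parameters $s=t_1$, $\xi=\eta_1$, $a=t_0u_0q^{-1}$, $b=-t_0u_0^{-1}q^{-1}$, $c=t_nu_n$, $d=-t_nu_n^{-1}$.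
   Context: $V=\mathbb C^n$, orthonormal basis $e_i$, coordinates $x_i$; $\hbar\in\mathbb C\setminus\pi i\mathbb Q$, $q=e^{\hbar/2}$; $t_0,t_1,t_n,u_0,u_n\in\mathbb C^*$. $g(z;a,b)=\frac{ae^z-a^{-1}}{be^z-b^{-1}}$; $\mathsf T^a_z$ is the shift $z\mapsto z+a$. Koornwinder operator: $M_{-e_1}=\sum_{i=1}^n\sum_{\epsilon=\pm1}(t_0t_n)^{-1}\prod_{j\ne i}g(\epsilon x_i-x_j;t_1,1)g(\epsilon x_i+x_j;t_1,1)\cdot\frac{(1-t_0u_0q^{-1}e^{\epsilon x_i})(1+t_0u_0^{-1}q^{-1}e^{\epsilon x_i})(1-t_nu_ne^{\epsilon x_i})(1+t_nu_n^{-1}e^{\epsilon x_i})}{(1-q^{-2}e^{2\epsilon x_i})(1-e^{2\epsilon x_i})}(\mathsf T^{-\epsilon\hbar}_{x_i}-1)+\kappa_t$, with $\kappa_t=\frac{t_1^n-t_1^{-n}}{t_1-t_1^{-1}}(t_0t_nt_1^{n-1}+t_0^{-1}t_n^{-1}t_1^{1-n})$. Generalized Koornwinder operator, acting on functions of $x_1..x_{N_1},y_1..y_{N_2}$ with parameters $\hbar,\xi,a,b,c,d$, $q=e^{\hbar/2}$, $s=e^{\xi/2}$: $\mathcal M_{N_1,N_2}=\sum_{i\le N_1,\epsilon=\pm1}A_i^\epsilon(\mathsf T^{-\epsilon\hbar}_{x_i}-1)+\frac{1-q^{-2}}{1-s^{-2}}\sum_{\ell\le N_2,\epsilon=\pm1}B_\ell^\epsilon(\mathsf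 T^{-\epsilon\xi}_{y_\ell}-1)$, where $A_i^\epsilon=\prod_{j\ne i}g(\epsilon x_i-x_j;s,1)g(\epsilon x_i+x_j;s,1)\prod_{\ell'}g(\epsilon x_i-y_{\ell'};q^{1/2}s^{1/2},q^{-1/2}s^{1/2})g(\epsilon x_i+y_{\ell'};q^{1/2}s^{1/2},q^{-1/2}s^{1/2})\frac{(1-ae^{\epsilon x_i})(1-be^{\epsilon x_i})(1-ce^{\epsilon x_i})(1-de^{\epsilon x_i})}{(1-q^{-2}e^{2\epsilon x_i})(1-e^{2\epsilon x_i})}$, $B_\ell^\epsilon=\prod_{j}g(\epsilon y_\ell-x_j;q^{1/2}s^{1/2},q^{1/2}s^{-1/2})g(\epsilon y_\ell+x_j;q^{1/2}s^{1/2},q^{1/2}s^{-1/2})\prod_{\ell'\ne\ell}g(\epsilon y_\ell-y_{\ell'};q,1)g(\epsilon y_\ell+y_{\ell'};q,1)\frac{\prod_{p\in\{a,b,c,d\}}(1-pqs^{-1}e^{\epsilon y_\ell})}{(1-s^{-2}e^{2\epsilon y_\ell})(1-e^{2\epsilon y_\ell})}$. Restriction: writing $\mathsf T^{-\epsilon\hbar}_{x_i}=\tau(\epsilon e_i)$ with $(\tau(\lambda)f)(x)=f(x-\hbar\lambda)$, an operator $D=\sum_\lambda g_\lambda\tau(\lambda)$ restricts to $\overline D=\sum_{\lambda'}\big(\sum_{\bar\lambda=\lambda'}g_\lambda\big)|_{\mathcal D_0}\tau(\lambda')$, where $\bar\lambda$ is the orthogonal projection onto $\overline V=\{x:(\alpha,x)=0\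 \forall\alpha\in S_0\}$, provided each restricted coefficient is a well-defined meromorphic function on $\mathcal D_0$. *)

(* Defs.v *)
From Stdlib Require Import Reals List ZArith Bool.
Import ListNotations.
Open Scope bool_scope.
Open Scope R_scope.

Record C := mkC { Cre : R ; Cim : R }.
Definition CR (r : R) : C := mkC r 0.
Definition C0 : C := CR 0.
Definition C1 : C := CR 1.
Definition Ci : C := mkC 0 1.
Definition Cnat (n : nat) : C := CR (INR n).
Definition CZ (z : Z) : C := CR (IZR z).
Definition Cadd (z w : C) : C := mkC (Cre z + Cre w) (Cim z + Cim w).
Definition Copp (z : C) : C := mkC (- Cre z) (- Cim z).
Definition Csub (z w : C) : C := Cadd z (Copp w).
Definition Cmul (z w : C) : C :=
  mkC (Cre z * Cre w - Cim z * Cim w) (Cre z * Cim w + Cim z * Cre w).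
Definition Cinv (z : C) : C :=
  let d := Cre z * Cre z + Cim z * Cim z in mkC (Cre z / d) (- Cim z / d).
Definition Cdiv (z w : C) : C := Cmul z (Cinv w).
Definition Cexp (z : C) : C :=
  mkC (exp (Cre z) * cos (Cim z)) (exp (Cre z) * sin (Cim z)).
Fixpoint Cpow (z : C) (n : nat) : C :=
  match n with O => C1 | S p => Cmul z (Cpow z p) end.

Definition Csum {A} (l : list A) (f : A -> C) : C :=
  fold_right (fun a acc => Cadd (f a) acc) C0 l.
Definition Cprod {A} (l : list A) (f : A -> C) : C :=
  fold_right (fun a acc => Cmul (f a) acc) C1 l.
Definition rng (n : nat) : list nat := seq 1 n.
Definition sgnC (e : bool) : C := if e then C1 else Copp C1.
Definition signs : list bool := [true; false].

(* "hbar is not in pi*i*Q":  b*hbar <> a*pi*i for all integers a, b with b <> 0 *)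
Definition not_in_piIQ (h : C) : Prop :=
  forall a b : Z, b <> 0%Z -> Cmul (CZ b) h <> Cmul (CZ a) (mkC 0 PI).

(* g(z;a,b) = (a e^z - a^{-1}) / (b e^z - b^{-1}) *)
Definition gden (z b : C) : C := Csub (Cmul b (Cexp z)) (Cinv b).
Definition gfun (z a b : C) : C := Cdiv (gden z a) (gden z b).

Definition Vec := nat -> C.
Definition unitvec (i : nat) (e : bool) : Vec :=
  fun j => if Nat.eqb j i then sgnC e else C0.
Definition zerovec : Vec := fun _ => C0.

(* A difference operator  D = sum_lambda g_lambda tau(lambda), given as the
   finite list of pairs (lambda, g_lambda), where (tau(lambda) f)(x) = f(x - hbar*lambda). *)
Definition DiffOp := list (Vec * (Vec -> C)).
Definition op_act (hbar : C) (D : DiffOp) (f : Vec -> C) (x : Vec) : C :=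
  Csum D (fun p => Cmul (snd p x) (f (fun j => Csub (x j) (Cmul hbar (fst p j))))).

(* the coefficient of T^{-eps*hbar}_{x_i} (including the factor (t0 tn)^{-1}) *)
Definition K_coef (n : nat) (hbar t0 t1 tn u0 un : C) (i : nat) (e : bool) (x : Vec) : C :=
  let q := Cexp (Cdiv hbar (Cnat 2)) in
  let qi := Cinv q in
  let ex := Cexp (Cmul (sgnC e) (x i)) in
  let e2x := Cexp (Cmul (Cnat 2) (Cmul (sgnC e) (x i))) in
  Cmul (Cinv (Cmul t0 tn))
   (Cmul (Cprod (rng n) (fun j => if Nat.eqb j i then C1 else
            Cmul (gfun (Csub (Cmul (sgnC e) (x i)) (x j)) t1 C1)
                 (gfun (Cadd (Cmul (sgnC e) (x i)) (x j)) t1 C1)))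
    (Cdiv
      (Cmul (Cmul (Csub C1 (Cmul (Cmul (Cmul t0 u0) qi) ex))
                  (Cadd C1 (Cmul (Cmul (Cmul t0 (Cinv u0)) qi) ex)))
            (Cmul (Csub C1 (Cmul (Cmul tn un) ex))
                  (Cadd C1 (Cmul (Cmul tn (Cinv un)) ex))))
      (Cmul (Csub C1 (Cmul (Cmul qi qi) e2x)) (Csub C1 e2x)))).

Definition kappa_t (n : nat) (t0 t1 tn : C) : C :=
  Cmul (Cdiv (Csub (Cpow t1 n) (Cinv (Cpow t1 n))) (Csub t1 (Cinv t1)))
       (Cadd (Cmul (Cmul t0 tn) (Cpow t1 (n - 1)))
             (Cmul (Cinv (Cmul t0 tn)) (Cinv (Cpow t1 (n - 1))))).

(* M_{-e_1} = sum_{i,eps} K_coef_{i,eps} (tau(eps e_i) - 1) + kappa_t, as a formal sum *)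
Definition Koornwinder_op (n : nat) (hbar t0 t1 tn u0 un : C) : DiffOp :=
  flat_map (fun i => map (fun e => (unitvec i e, K_coef n hbar t0 t1 tn u0 un i e)) signs)
           (rng n)
  ++ [(zerovec, fun x => Csub (kappa_t n t0 t1 tn)
         (Csum (rng n) (fun i => Csum signs (fun e => K_coef n hbar t0 t1 tn u0 un i e x))))].

(* points x where all denominators occurring in M_{-e_1} are nonzero *)
Definition K_good (n : nat) (hbar t1 : C) (x : Vec) : Prop :=
  let q := Cexp (Cdiv hbar (Cnat 2)) in
  Csub t1 (Cinv t1) <> C0 /\
  forall i e, In i (rng n) ->
    (forall j, In j (rng n) -> j <> i ->
        gden (Csub (Cmul (sgnC e) (x i)) (x j)) C1 <> C0 /\
        gden (Cadd (Cmul (sgnC e) (x i)) (x j)) C1 <> C0) /\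
    Csub C1 (Cmul (Cinv (Cmul q q)) (Cexp (Cmul (Cnat 2) (Cmul (sgnC e) (x i))))) <> C0 /\
    Csub C1 (Cexp (Cmul (Cnat 2) (Cmul (sgnC e) (x i)))) <> C0.

(* e_j - e_{j+1} is in S_0  iff  j = N1 + k(l-1) + j' with 1 <= l <= m, 1 <= j' <= k-1 *)
Definition inS0 (N1 k m j : nat) : Prop :=
  (N1 < j)%nat /\ (j < N1 + m * k)%nat /\ Nat.modulo (j - N1) k <> 0%nat.
Definition inD0 (N1 k m : nat) (eta1 : C) (x : Vec) : Prop :=
  forall j, inS0 N1 k m j -> Csub (x j) (x (S j)) = eta1.
(* orthogonal projection C^n -> Vbar = {x : (alpha,x)=0 for alpha in S_0}:
   coordinates 1..N1 are kept, each block is replaced by its average *)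
Definition projS0 (N1 k m : nat) (lam : Vec) : Vec :=
  fun j =>
    if (1 <=? j)%nat && (j <=? N1)%nat then lam j
    else if (N1 <? j)%nat && (j <=? N1 + m * k)%nat then
      Cmul (Cinv (Cnat k))
           (Csum (rng k) (fun s => lam (N1 + k * ((j - N1 - 1) / k) + s)%nat))
    else C0.
(* coordinates on D_0: (x_1..x_{N1}) and y_l = (1/k) sum_{s=0}^{k-1} x_{N1+kl-s} (1<=l<=m);
   values outside these index ranges are set to 0 *)
Definition chartD0 (N1 k m : nat) (x : Vec) : Vec * Vec :=
  (fun i => if (1 <=? i)%nat && (i <=? N1)%nat then x i else C0,
   fun l => if (1 <=? l)%nat && (l <=? m)%nat then
              Cmul (Cinv (Cnat k)) (Csum (seq 0 k) (fun s => x (N1 + k * l - s)%nat))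
            else C0).

(* Restriction of D = sum g_lambda tau(lambda) to D_0, acting on functions F of the
   D_0-coordinates:  (Dbar F)(chart x) = sum_lambda g_lambda(x) F(chart(x - hbar*lambdabar)),
   which is sum_{lambda'} (sum_{lambdabar = lambda'} g_lambda)|_{D_0} tau(lambda') F. *)
Definition restr_act (N1 k m : nat) (hbar : C) (D : DiffOp) (F : Vec * Vec -> C) (x : Vec) : C :=
  Csum D (fun p => Cmul (snd p x)
     (F (chartD0 N1 k m (fun j => Csub (x j) (Cmul hbar (projS0 N1 k m (fst p) j)))))).

Definition shift_at (v : Vec) (i : nat) (d : C) : Vec :=
  fun j => if Nat.eqb j i then Csub (v j) d else v j.

Definition A_coef (N1 N2 : nat) (hbar xi a b c d : C) (i : nat) (e : bool) (xs ys : Vec) : C :=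
  let q := Cexp (Cdiv hbar (Cnat 2)) in
  let s := Cexp (Cdiv xi (Cnat 2)) in
  let qh := Cexp (Cdiv hbar (Cnat 4)) in
  let sh := Cexp (Cdiv xi (Cnat 4)) in
  let ex := Cexp (Cmul (sgnC e) (xs i)) in
  let e2x := Cexp (Cmul (Cnat 2) (Cmul (sgnC e) (xs i))) in
  Cmul (Cprod (rng N1) (fun j => if Nat.eqb j i then C1 else
            Cmul (gfun (Csub (Cmul (sgnC e) (xs i)) (xs j)) s C1)
                 (gfun (Cadd (Cmul (sgnC e) (xs i)) (xs j)) s C1)))
  (Cmul (Cprod (rng N2) (fun l =>
            Cmul (gfun (Csub (Cmul (sgnC e) (xs i)) (ys l)) (Cmul qh sh) (Cmul (Cinv qh) sh))
                 (gfun (Cadd (Cmul (sgnC e) (xs i)) (ys l)) (Cmul qh sh) (Cmul (Cinv qh) sh))))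
   (Cdiv (Cprod [a; b; c; d] (fun p => Csub C1 (Cmul p ex)))
         (Cmul (Csub C1 (Cmul (Cinv (Cmul q q)) e2x)) (Csub C1 e2x)))).

Definition B_coef (N1 N2 : nat) (hbar xi a b c d : C) (l : nat) (e : bool) (xs ys : Vec) : C :=
  let q := Cexp (Cdiv hbar (Cnat 2)) in
  let s := Cexp (Cdiv xi (Cnat 2)) in
  let qh := Cexp (Cdiv hbar (Cnat 4)) in
  let sh := Cexp (Cdiv xi (Cnat 4)) in
  let ey := Cexp (Cmul (sgnC e) (ys l)) in
  let e2y := Cexp (Cmul (Cnat 2) (Cmul (sgnC e) (ys l))) in
  Cmul (Cprod (rng N1) (fun j =>
            Cmul (gfun (Csub (Cmul (sgnC e) (ys l)) (xs j)) (Cmul qh sh) (Cmul qh (Cinv sh)))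
                 (gfun (Cadd (Cmul (sgnC e) (ys l)) (xs j)) (Cmul qh sh) (Cmul qh (Cinv sh)))))
  (Cmul (Cprod (rng N2) (fun l' => if Nat.eqb l' l then C1 else
            Cmul (gfun (Csub (Cmul (sgnC e) (ys l)) (ys l')) q C1)
                 (gfun (Cadd (Cmul (sgnC e) (ys l)) (ys l')) q C1)))
   (Cdiv (Cprod [a; b; c; d] (fun p => Csub C1 (Cmul (Cmul (Cmul p q) (Cinv s)) ey)))
         (Cmul (Csub C1 (Cmul (Cinv (Cmul s s)) e2y)) (Csub C1 e2y)))).

Definition genK_act (N1 N2 : nat) (hbar xi a b c d : C) (F : Vec * Vec -> C) (z : Vec * Vec) : C :=
  let xs := fst z in let ys := snd z in
  let q := Cexp (Cdiv hbar (Cnat 2)) in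
  let s := Cexp (Cdiv xi (Cnat 2)) in
  Cadd
   (Csum (rng N1) (fun i => Csum signs (fun e =>
      Cmul (A_coef N1 N2 hbar xi a b c d i e xs ys)
           (Csub (F (shift_at xs i (Cmul (sgnC e) hbar), ys)) (F (xs, ys))))))
   (Cmul (Cdiv (Csub C1 (Cinv (Cmul q q))) (Csub C1 (Cinv (Cmul s s))))
     (Csum (rng N2) (fun l => Csum signs (fun e =>
        Cmul (B_coef N1 N2 hbar xi a b c d l e xs ys)
             (Csub (F (xs, shift_at ys l (Cmul (sgnC e) xi))) (F (xs, ys))))))).

(* points where all denominators occurring in M_{N1,N2} are nonzero *)
Definition M_good (N1 N2 : nat) (hbar xi : C) (z : Vec * Vec) : Prop :=
  let xs := fst z in let ys := snd z in
  let q := Cexp (Cdiv hbar (Cnat 2)) in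
  let s := Cexp (Cdiv xi (Cnat 2)) in
  let qh := Cexp (Cdiv hbar (Cnat 4)) in
  let sh := Cexp (Cdiv xi (Cnat 4)) in
  Csub C1 (Cinv (Cmul s s)) <> C0 /\
  (forall i e, In i (rng N1) ->
    (forall j, In j (rng N1) -> j <> i ->
        gden (Csub (Cmul (sgnC e) (xs i)) (xs j)) C1 <> C0 /\
        gden (Cadd (Cmul (sgnC e) (xs i)) (xs j)) C1 <> C0) /\
    (forall l, In l (rng N2) ->
        gden (Csub (Cmul (sgnC e) (xs i)) (ys l)) (Cmul (Cinv qh) sh) <> C0 /\
        gden (Cadd (Cmul (sgnC e) (xs i)) (ys l)) (Cmul (Cinv qh) sh) <> C0) /\
    Csub C1 (Cmul (Cinv (Cmul q q)) (Cexp (Cmul (Cnat 2) (Cmul (sgnC e) (xs i))))) <> C0 /\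
    Csub C1 (Cexp (Cmul (Cnat 2) (Cmul (sgnC e) (xs i)))) <> C0) /\
  (forall l e, In l (rng N2) ->
    (forall j, In j (rng N1) ->
        gden (Csub (Cmul (sgnC e) (ys l)) (xs j)) (Cmul qh (Cinv sh)) <> C0 /\
        gden (Cadd (Cmul (sgnC e) (ys l)) (xs j)) (Cmul qh (Cinv sh)) <> C0) /\
    (forall l', In l' (rng N2) -> l' <> l ->
        gden (Csub (Cmul (sgnC e) (ys l)) (ys l')) C1 <> C0 /\
        gden (Cadd (Cmul (sgnC e) (ys l)) (ys l')) C1 <> C0) /\
    Csub C1 (Cmul (Cinv (Cmul s s)) (Cexp (Cmul (Cnat 2) (Cmul (sgnC e) (ys l))))) <> C0 /\
    Csub C1 (Cexp (Cmul (Cnat 2) (Cmul (sgnC e) (ys l)))) <> C0).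

(* Main.v *)
From Stdlib Require Import Reals Lra Lia List Arith ZArith Field Ring FunctionalExtensionality Classical Bool.
Require Import Defs.
Import ListNotations.

Lemma C_ext : forall a b : C, Cre a = Cre b -> Cim a = Cim b -> a = b.
Proof. intros [a1 a2] [b1 b2]; simpl; intros -> ->; reflexivity. Qed.

Lemma Cring : ring_theory C0 C1 Cadd Cmul Csub Copp (@eq C).
Proof.
  constructor; intros; apply C_ext; unfold Cadd, Cmul, Csub, Copp, C0, C1, CR; simpl; ring.
Qed.

Lemma C1_neq_C0 : C1 <> C0.
Proof. intro H. injection H. lra. Qed.

Lemma Cfield : field_theory C0 C1 Cadd Cmul Csub Copp Cdiv Cinv (@eq C).
Proof.
  constructor.
  - exact Cring.
  - exact C1_neq_C0.
  - reflexivity.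
  - intros [a b] H. unfold Cinv, Cmul, C1, CR; simpl.
    assert (Hd : a * a + b * b <> 0).
    { intro Hd. apply H. assert (a = 0) by nra. assert (b = 0) by nra. subst. reflexivity. }
    apply C_ext; simpl; field; exact Hd.
Qed.

Add Field Cfld : Cfield.

Declare Scope C_scope.
Delimit Scope C_scope with C.
Infix "+" := Cadd : C_scope.
Infix "*" := Cmul : C_scope.
Infix "-" := Csub : C_scope.
Infix "/" := Cdiv : C_scope.
Notation "- x" := (Copp x) : C_scope.
Notation "/ x" := (Cinv x) : C_scope.

Lemma Cnat_S : forall n, Cnat (S n) = Cadd (Cnat n) C1.
Proof. intros n; apply C_ext; unfold Cnat, Cadd, C1, CR; cbn [Cre Cim]; rewrite ?S_INR; ring. Qed.
Lemma Cnat_0 : Cnat 0 = C0. Proof. reflexivity. Qed.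
Lemma Cnat_add : forall a b, Cnat (a + b) = Cadd (Cnat a) (Cnat b).
Proof. intros a b; apply C_ext; unfold Cnat, Cadd, CR; cbn [Cre Cim]; rewrite ?plus_INR; ring. Qed.
Lemma Cnat_mul : forall a b, Cnat (a * b) = Cmul (Cnat a) (Cnat b).
Proof. intros a b; apply C_ext; unfold Cnat, Cmul, CR; cbn [Cre Cim]; rewrite ?mult_INR; ring. Qed.
Lemma Cnat_neq0 : forall n, n <> O -> Cnat n <> C0.
Proof. intros n Hn H. injection H. intros. apply (not_0_INR n Hn). lra. Qed.

Lemma Cexp_add : forall a b, Cexp (Cadd a b) = Cmul (Cexp a) (Cexp b).
Proof.
  intros [a1 a2] [b1 b2]; apply C_ext; unfold Cexp, Cadd, Cmul; simpl;
  rewrite exp_plus, ?cos_plus, ?sin_plus; ring.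
Qed.
Lemma Cexp_0 : Cexp C0 = C1.
Proof. apply C_ext; unfold Cexp, C0, C1, CR; simpl; rewrite ?exp_0, ?cos_0, ?sin_0; ring. Qed.
Lemma Cexp_neq0 : forall z, Cexp z <> C0.
Proof.
  intros [a b] H; unfold Cexp, C0, CR in H; injection H; intros H1 H2.
  assert (He : exp a > 0) by apply exp_pos.
  pose proof (sin2_cos2 b) as Hs. unfold Rsqr in Hs.
  assert (sin b = 0) by (apply Rmult_eq_reg_l with (exp a); lra).
  assert (cos b = 0) by (apply Rmult_eq_reg_l with (exp a); lra).
  nra.
Qed.
Lemma Cexp_opp : forall z, Cexp (Copp z) = Cinv (Cexp z).
Proof.
  intros z. pose proof (Cexp_neq0 z).
  assert (H1 : Cmul (Cexp (Copp z)) (Cexp z) = C1).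
  { rewrite <- Cexp_add. replace (Cadd (Copp z) z) with C0 by ring. apply Cexp_0. }
  replace (Cexp (Copp z)) with (Cmul (Cmul (Cexp (Copp z)) (Cexp z)) (Cinv (Cexp z))) by (field; auto).
  rewrite H1. ring.
Qed.
Lemma Cexp_sub : forall a b, Cexp (Csub a b) = Cdiv (Cexp a) (Cexp b).
Proof. intros. unfold Csub, Cdiv. rewrite Cexp_add, Cexp_opp. reflexivity. Qed.
Lemma Cexp_nat : forall n z, Cexp (Cmul (Cnat n) z) = Cpow (Cexp z) n.
Proof.
  induction n; intros z.
  - rewrite Cnat_0. replace (Cmul C0 z) with C0 by ring. apply Cexp_0.
  - rewrite Cnat_S. replace (Cmul (Cadd (Cnat n) C1) z) with (Cadd z (Cmul (Cnat n) z)) by ring.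
    rewrite Cexp_add, IHn. reflexivity.
Qed.
Lemma Cmul_integral : forall a b, Cmul a b = C0 -> a = C0 \/ b = C0.
Proof.
  intros a b H. destruct (classic (a = C0)) as [Ha|Ha]; [left; exact Ha|right].
  replace b with (Cmul (Cinv a) (Cmul a b)) by (field; exact Ha).
  rewrite H; ring.
Qed.
Lemma Cmul_neq0 : forall a b, a <> C0 -> b <> C0 -> Cmul a b <> C0.
Proof. intros a b Ha Hb H; destruct (Cmul_integral _ _ H); auto. Qed.
Lemma Cpow_neq0 : forall z n, z <> C0 -> Cpow z n <> C0.
Proof.
  intros z n Hz; induction n; simpl.
  - exact C1_neq_C0.
  - apply Cmul_neq0; auto.
Qed.
Lemma Cinv_neq0 : forall a, a <> C0 -> Cinv a <> C0.
Proof. intros a Ha H. apply C1_neq_C0. replace C1 with (Cmul a (Cinv a)) by (field; auto). rewrite H; ring. Qed.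

Ltac cnz := repeat split; try (let Hc := fresh in intro Hc; injection Hc; intros; lra); auto; try exact C1_neq_C0.

Lemma Cinv_0 : Cinv C0 = C0.
Proof. apply C_ext; unfold Cinv, C0, CR; cbn [Cre Cim]; unfold Rdiv; ring. Qed.

Lemma Cinv_mul : forall a b, Cinv (Cmul a b) = Cmul (Cinv a) (Cinv b).
Proof.
  intros a b. destruct (classic (a = C0)) as [Ha|Ha].
  - subst. replace (Cmul C0 b) with C0 by ring. rewrite Cinv_0; ring.
  - destruct (classic (b = C0)) as [Hb|Hb].
    + subst. replace (Cmul a C0) with C0 by ring. rewrite Cinv_0; ring.
    + field. auto.
Qed.

Lemma Cdiv_scale : forall a b a' b' l, l <> C0 -> a' = Cmul l a -> b' = Cmul l b ->
  Cdiv a' b' = Cdiv a b.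
Proof.
  intros a b a' b' l Hl -> ->. unfold Cdiv. rewrite Cinv_mul.
  replace (Cmul (Cmul l a) (Cmul (Cinv l) (Cinv b))) with (Cmul (Cmul l (Cinv l)) (Cmul a (Cinv b))) by ring.
  replace (Cmul l (Cinv l)) with C1 by (field; auto). ring.
Qed.

Lemma Csum_app : forall {A} (l1 l2 : list A) f, Csum (l1 ++ l2) f = Cadd (Csum l1 f) (Csum l2 f).
Proof. intros A l1 l2 f; induction l1; simpl; [ring| rewrite IHl1; ring]. Qed.
Lemma Cprod_app : forall {A} (l1 l2 : list A) f, Cprod (l1 ++ l2) f = Cmul (Cprod l1 f) (Cprod l2 f).
Proof. intros A l1 l2 f; induction l1; simpl; [ring| rewrite IHl1; ring]. Qed.
Lemma Csum_ext : forall {A} (l : list A) f g, (forall a, In a l -> f a = g a) -> Csum l f = Csum l g.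
Proof. intros A l f g H; induction l as [|b l IH]; simpl; auto. f_equal; [apply H; simpl; auto| apply IH; intros; apply H; simpl; auto]. Qed.
Lemma Cprod_ext : forall {A} (l : list A) f g, (forall a, In a l -> f a = g a) -> Cprod l f = Cprod l g.
Proof. intros A l f g H; induction l as [|b l IH]; simpl; auto. f_equal; [apply H; simpl; auto| apply IH; intros; apply H; simpl; auto]. Qed.
Lemma Csum_add : forall {A} (l : list A) f g,
  Csum l (fun a => Cadd (f a) (g a)) = Cadd (Csum l f) (Csum l g).
Proof. intros A l f g; induction l; simpl; [ring| rewrite IHl; ring]. Qed.
Lemma Csum_sub : forall {A} (l : list A) f g,
  Csum l (fun a => Csub (f a) (g a)) = Csub (Csum l f) (Csum l g).
Proof. intros A l f g; induction l; simpl; [ring| rewrite IHl; ring]. Qed.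
Lemma Csum_scal : forall {A} (l : list A) c f,
  Csum l (fun a => Cmul c (f a)) = Cmul c (Csum l f).
Proof. intros A l c f; induction l; simpl; [ring| rewrite IHl; ring]. Qed.
Lemma Csum_scal_r : forall {A} (l : list A) c f,
  Csum l (fun a => Cmul (f a) c) = Cmul (Csum l f) c.
Proof. intros A l c f; induction l; simpl; [ring| rewrite IHl; ring]. Qed.
Lemma Csum_zero : forall {A} (l : list A) f, (forall a, In a l -> f a = C0) -> Csum l f = C0.
Proof. intros A l f H; induction l as [|b l IH]; simpl; auto. rewrite (H b), IH; [ring| |]; intros; try apply H; simpl; auto. Qed.
Lemma Cprod_mul : forall {A} (l : list A) f g,
  Cprod l (fun a => Cmul (f a) (g a)) = Cmul (Cprod l f) (Cprod l g).
Proof. intros A l f g; induction l; simpl; [ring| rewrite IHl; ring]. Qed.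
Lemma Csum_flat_map : forall {A B} (h : A -> list B) l f,
  Csum (flat_map h l) f = Csum l (fun a => Csum (h a) f).
Proof. intros A B h l f; induction l; simpl; auto. rewrite Csum_app, IHl; auto. Qed.
Lemma Cprod_flat_map : forall {A B} (h : A -> list B) l f,
  Cprod (flat_map h l) f = Cprod l (fun a => Cprod (h a) f).
Proof. intros A B h l f; induction l; simpl; auto. rewrite Cprod_app, IHl; auto. Qed.
Lemma Csum_map : forall {A B} (h : A -> B) l f, Csum (map h l) f = Csum l (fun a => f (h a)).
Proof. intros A B h l f; induction l; simpl; auto. rewrite IHl; auto. Qed.
Lemma Cprod_zero : forall {A} (l : list A) f a, In a l -> f a = C0 -> Cprod l f = C0.
Proof.
  intros A l f a Hin H; induction l; simpl in *; [contradiction|].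
  destruct Hin as [<-|Hin]; [rewrite H; ring| rewrite IHl; auto; ring].
Qed.
Lemma Cprod_pull : forall (l : list nat) (a : nat) u f, NoDup l -> In a l ->
  Cprod l (fun b => if Nat.eqb b a then u else f b)
  = Cmul u (Cprod l (fun b => if Nat.eqb b a then C1 else f b)).
Proof.
  intros l a u f Hnd Hin; induction l as [|b l IH]; simpl in *; [contradiction|].
  inversion Hnd; subst.
  destruct Hin as [<-|Hin].
  - rewrite Nat.eqb_refl.
    assert (E1 : forall v, Cprod l (fun c => if Nat.eqb c b then v else f c) = Cprod l f).
    { intros v; apply Cprod_ext. intros c Hc; destruct (Nat.eqb_spec c b); [subst; contradiction| auto]. }
    rewrite !E1. ring.
  - destruct (Nat.eqb_spec b a); [subst; contradiction|].
    rewrite IH; auto; ring.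
Qed.
Lemma Csum_seq_shift : forall s t c f,
  Csum (seq (s + t) c) f = Csum (seq t c) (fun r => f (s + r)%nat).
Proof.
  intros s t c f; revert t; induction c; intros t; simpl; auto.
  rewrite <- IHc. replace (S (s + t)) with (s + S t)%nat by lia. reflexivity.
Qed.
Lemma Cprod_seq_shift : forall s t c f,
  Cprod (seq (s + t) c) f = Cprod (seq t c) (fun r => f (s + r)%nat).
Proof.
  intros s t c f; revert t; induction c; intros t; simpl; auto.
  rewrite <- IHc. replace (S (s + t)) with (s + S t)%nat by lia. reflexivity.
Qed.

Lemma TL_up : forall (al : nat -> C) u a c,
  (forall r, (a <= r < a + c)%nat -> al r <> C0) ->
  Cmul (Cprod (seq a c) (fun r => Cmul (Cmul u (al (S r))) (Cinv (al r)))) (al a)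
  = Cmul (Cpow u c) (al (a + c)%nat).
Proof.
  intros al u a c; revert a; induction c; intros a H; simpl.
  - rewrite Nat.add_0_r; ring.
  - assert (Ha : al a <> C0) by (apply H; lia).
    replace (a + S c)%nat with (S a + c)%nat by lia.
    transitivity (Cmul u (Cmul (Cpow u c) (al (S a + c)%nat))); [|ring].
    rewrite <- IHc by (intros r Hr; apply H; lia).
    field. auto.
Qed.
Lemma TL_down : forall (al : nat -> C) u a c,
  (forall r, (a < r <= a + c)%nat -> al r <> C0) ->
  Cmul (Cprod (seq a c) (fun r => Cmul (Cmul u (al r)) (Cinv (al (S r))))) (al (a + c)%nat)
  = Cmul (Cpow u c) (al a).
Proof.
  intros al u a c; revert a; induction c; intros a H; simpl.
  - rewrite Nat.add_0_r; ring.
  - assert (Ha : al (S a) <> C0) by (apply H; lia).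
    replace (a + S c)%nat with (S a + c)%nat by lia.
    transitivity (Cmul (Cmul (Cmul u (al a)) (Cinv (al (S a))))
       (Cmul (Cprod (seq (S a) c) (fun r => Cmul (Cmul u (al r)) (Cinv (al (S r))))) (al (S a + c)%nat))).
    { ring. }
    rewrite IHc by (intros r Hr; apply H; lia).
    field. auto.
Qed.

Lemma Csum2_split : forall {A B} (l1 : list A) (l2 : list B) (a b : A -> B -> C) c,
  Csum l1 (fun i => Csum l2 (fun e => Cmul (a i e) (b i e)))
  = Cadd (Csum l1 (fun i => Csum l2 (fun e => Cmul (a i e) (Csub (b i e) c))))
         (Cmul (Csum l1 (fun i => Csum l2 (fun e => a i e))) c).
Proof.
  intros. rewrite <- Csum_scal_r, <- Csum_add. apply Csum_ext. intros i _.
  rewrite <- Csum_scal_r, <- Csum_add. apply Csum_ext. intros e _. ring.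
Qed.

Lemma Csum_signs : forall (f : bool -> C), Csum signs f = Cadd (f true) (f false).
Proof. intros. unfold signs. simpl. ring. Qed.
Lemma Csum_signs_swap : forall {A} (l : list A) (g : A -> bool -> C),
  Csum l (fun j => Csum signs (fun e => g j e)) = Cadd (Csum l (fun j => g j true)) (Csum l (fun j => g j false)).
Proof. intros. rewrite <- Csum_add. apply Csum_ext. intros. apply Csum_signs. Qed.

Lemma blocks_seq : forall k a m,
  seq (a + 1) (m * k) = flat_map (fun l => seq (a + k * (l - 1) + 1) k) (seq 1 m).
Proof.
  intros k a m; induction m.
  - reflexivity.
  - rewrite seq_S, flat_map_app, <- IHm. simpl flat_map.
    rewrite app_nil_r.
    replace (S m * k)%nat with (m * k + k)%nat by lia.
    rewrite seq_app. f_equal. f_equal. nia.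
Qed.

Lemma rng_split : forall n k m, (m * k <= n)%nat ->
  rng n = rng (n - m * k) ++ flat_map (fun l => seq ((n - m*k) + k * (l - 1) + 1) k) (rng m).
Proof.
  intros n k m H. unfold rng.
  rewrite <- blocks_seq.
  replace n with ((n - m * k) + m * k)%nat at 1 by lia.
  rewrite seq_app. f_equal. f_equal. lia.
Qed.

Lemma div_blk : forall k N1 l r, (0 < k)%nat -> (r < k)%nat ->
  ((N1 + k * l + 1 + r - N1 - 1) / k = l)%nat /\ ((N1 + k * l + 1 + r - N1 - 1) mod k = r)%nat.
Proof.
  intros k N1 l r Hk Hr.
  replace (N1 + k * l + 1 + r - N1 - 1)%nat with (k * l + r)%nat by lia.
  split.
  - symmetry; apply Nat.div_unique with r; lia.
  - symmetry; apply Nat.mod_unique with l; lia.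
Qed.

Lemma sub_eq : forall a b e : C, Csub a b = e -> b = Csub a e.
Proof. intros a b e E. rewrite <- E. ring. Qed.

Lemma D0_blk : forall n k m eta x, (2 <= k)%nat ->
  inD0 (n - m * k) k m eta x ->
  forall l r, (1 <= l <= m)%nat -> (r < k)%nat ->
  x ((n - m*k) + k * (l - 1) + 1 + r)%nat
  = Csub (x ((n - m*k) + k * (l - 1) + 1)%nat) (Cmul (Cnat r) eta).
Proof.
  intros n k m eta x Hk HD l r Hl. induction r; intros Hr.
  - rewrite Nat.add_0_r, Cnat_0. ring.
  - set (N1 := (n - m * k)%nat) in *.
    assert (HS : inS0 N1 k m (N1 + k * (l - 1) + 1 + r)%nat).
    { unfold inS0. split; [nia|]. split.
      { assert (k * (l - 1) + k <= m * k)%nat by (destruct l; [lia|]; replace (S l - 1)%nat with l by lia; nia). lia. }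
      replace (N1 + k * (l - 1) + 1 + r - N1)%nat with ((1 + r) + (l-1) * k)%nat by nia.
      rewrite Nat.Div0.mod_add, Nat.mod_small by lia. lia. }
    pose proof (HD _ HS) as E.
    replace (N1 + k * (l - 1) + 1 + S r)%nat with (S (N1 + k * (l - 1) + 1 + r)) by nia.
    rewrite IHr in E by lia.
    rewrite Cnat_S.
    apply sub_eq in E. rewrite E. ring.
Qed.

Lemma Csum_cons : forall {A} (a : A) l f, Csum (a :: l) f = Cadd (f a) (Csum l f).
Proof. reflexivity. Qed.
Lemma Cprod_cons : forall {A} (a : A) l f, Cprod (a :: l) f = Cmul (f a) (Cprod l f).
Proof. reflexivity. Qed.

Lemma sum_tri : forall c, Cmul (Cnat 2) (Csum (seq 0 c) (fun s => Cnat (c - 1 - s)))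
  = Cmul (Cnat c) (Csub (Cnat c) C1).
Proof.
  induction c.
  - simpl. rewrite Cnat_0. ring.
  - change (seq 0 (S c)) with (0 :: seq (1 + 0) c)%nat.
    rewrite Csum_cons, Csum_seq_shift.
    rewrite (Csum_ext _ _ (fun s => Cnat (c - 1 - s))) by (intros a _; f_equal; lia).
    transitivity (Cadd (Cmul (Cnat 2) (Cnat (S c - 1 - 0))) (Cmul (Cnat 2) (Csum (seq 0 c) (fun s : nat => Cnat (c - 1 - s))))); [ring|].
    rewrite IHc. replace (S c - 1 - 0)%nat with c by lia. rewrite !Cnat_S, Cnat_0. ring.
Qed.

Lemma Csum_const : forall {A} (l : list A) v, Csum l (fun _ => v) = Cmul (Cnat (length l)) v.
Proof. intros A l v; induction l; simpl length; [rewrite Cnat_0; simpl; ring|rewrite Csum_cons, IHl, Cnat_S; ring]. Qed.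

Lemma Cnat_pred : forall k, (1 <= k)%nat -> Cnat (k - 1) = Csub (Cnat k) C1.
Proof. intros k Hk. destruct k; [lia|]. rewrite Cnat_S. replace (S k - 1)%nat with k by lia. ring. Qed.

Lemma Cnat2_neq0 : Cnat 2 <> C0. Proof. apply Cnat_neq0; lia. Qed.

Lemma chart_y : forall n k m eta x, (2 <= k)%nat ->
  inD0 (n - m * k) k m eta x ->
  forall l, (1 <= l <= m)%nat ->
  snd (chartD0 (n - m * k) k m x) l
  = Csub (x ((n - m*k) + k * (l - 1) + 1)%nat) (Cmul (Cdiv (Cnat (k - 1)) (Cnat 2)) eta).
Proof.
  intros n k m eta x Hk HD l Hl.
  set (N1 := (n - m * k)%nat) in *.
  unfold chartD0; cbv beta iota delta [snd].
  replace ((1 <=? l)%nat && (l <=? m)%nat)%bool with true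
    by (symmetry; apply andb_true_intro; split; apply Nat.leb_le; lia).
  rewrite (Csum_ext _ _ (fun s => Csub (x (N1 + k * (l - 1) + 1)%nat) (Cmul (Cnat (k - 1 - s)) eta))).
  2:{ intros s Hs. apply in_seq in Hs.
      transitivity (x (N1 + k*(l-1) + 1 + (k-1-s))%nat); [f_equal; nia| apply D0_blk; auto; lia]. }
  rewrite Csum_sub, Csum_const, length_seq, Csum_scal_r.
  assert (HS : Csum (seq 0 k) (fun s => Cnat (k - 1 - s)) = Cdiv (Cmul (Cnat k) (Csub (Cnat k) C1)) (Cnat 2)).
  { rewrite <- sum_tri. field. exact Cnat2_neq0. }
  rewrite HS, Cnat_pred by lia.
  assert (Hk0 : Cnat k <> C0) by (apply Cnat_neq0; lia).
  field. split; auto. exact Cnat2_neq0.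
Qed.

Lemma mul_inv_eq : forall A A' B B', A = A' -> B = B' -> Cmul A (Cinv B) = Cmul A' (Cinv B').
Proof. intros; subst; reflexivity. Qed.

Lemma Cinv_C1 : Cinv C1 = C1.
Proof. field. exact C1_neq_C0. Qed.

Lemma Cpow_S : forall a r, Cpow a (S r) = Cmul a (Cpow a r).
Proof. reflexivity. Qed.

Section Tel.
Variables (t1 T Z W : C) (v : nat -> C) (z : C).
Hypothesis Ht1 : t1 <> C0.
Hypothesis HT : T = Cmul t1 t1.
Hypothesis HW : W <> C0.
Hypothesis HZ : Cexp z = Z.

Definition alm (r : nat) : C := Csub (Cmul (Cmul Z (Cinv W)) (Cpow T r)) C1.
Definition bep (r : nat) : C := Csub (Cmul (Cmul (Cmul Z W) T) (Cinv (Cpow T r))) C1.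

Lemma T_neq0 : T <> C0.
Proof. rewrite HT. apply Cmul_neq0; auto. Qed.

Lemma gden_minus : forall r, Cexp (v r) = Cmul W (Cinv (Cpow T r)) ->
  gden (Csub z (v r)) C1 = alm r.
Proof.
  intros r Hv. unfold gden, alm. rewrite Cexp_sub, HZ, Hv, Cinv_C1.
  pose proof (Cpow_neq0 T r T_neq0). unfold Cdiv. field. auto.
Qed.
Lemma gden_plus : forall r, Cexp (v r) = Cmul W (Cinv (Cpow T r)) ->
  gden (Cadd z (v r)) C1 = bep (S r).
Proof.
  intros r Hv. unfold gden, bep. rewrite Cexp_add, HZ, Hv, Cinv_C1, Cpow_S.
  pose proof (Cpow_neq0 T r T_neq0). pose proof T_neq0. field. auto.
Qed.
Lemma gfun_minus : forall r, Cexp (v r) = Cmul W (Cinv (Cpow T r)) ->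
  gfun (Csub z (v r)) t1 C1 = Cmul (Cmul (Cinv t1) (alm (S r))) (Cinv (alm r)).
Proof.
  intros r Hv. unfold gfun, Cdiv at 1. rewrite (gden_minus r Hv).
  apply mul_inv_eq; auto.
  unfold gden, alm. rewrite Cexp_sub, HZ, Hv, Cpow_S, HT.
  pose proof (Cpow_neq0 T r T_neq0). rewrite HT in *. unfold Cdiv. field. auto.
Qed.
Lemma gfun_plus : forall r, Cexp (v r) = Cmul W (Cinv (Cpow T r)) ->
  gfun (Cadd z (v r)) t1 C1 = Cmul (Cmul (Cinv t1) (bep r)) (Cinv (bep (S r))).
Proof.
  intros r Hv. unfold gfun, Cdiv at 1. rewrite (gden_plus r Hv).
  apply mul_inv_eq; auto.
  unfold gden, bep. rewrite Cexp_add, HZ, Hv, HT.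
  pose proof (Cpow_neq0 T r T_neq0). rewrite HT in *. field. auto.
Qed.

Lemma block_prod : forall a c,
  (forall r, (a <= r < a + c)%nat -> Cexp (v r) = Cmul W (Cinv (Cpow T r))) ->
  (forall r, (a <= r < a + c)%nat -> alm r <> C0) ->
  (forall r, (a < r <= a + c)%nat -> bep r <> C0) ->
  Cmul (Cmul (Cprod (seq a c) (fun r => Cmul (gfun (Csub z (v r)) t1 C1) (gfun (Cadd z (v r)) t1 C1)))
     (alm a)) (bep (a + c)%nat)
  = Cmul (Cmul (Cpow (Cinv t1) c) (alm (a + c)%nat)) (Cmul (Cpow (Cinv t1) c) (bep a)).
Proof.
  intros a c Hv Ha Hb.
  rewrite (Cprod_ext _ _ (fun r => Cmul (Cmul (Cmul (Cinv t1) (alm (S r))) (Cinv (alm r)))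
                                      (Cmul (Cmul (Cinv t1) (bep r)) (Cinv (bep (S r)))))).
  2:{ intros r Hr. apply in_seq in Hr. rewrite gfun_minus, gfun_plus by (apply Hv; lia). reflexivity. }
  rewrite Cprod_mul.
  rewrite <- (TL_up alm (Cinv t1) a c Ha), <- (TL_down bep (Cinv t1) a c Hb).
  ring.
Qed.
End Tel.

Lemma Cexp_sgn_true : forall z, Cexp (Cmul (sgnC true) z) = Cexp z.
Proof. intros; simpl; f_equal; ring. Qed.
Lemma Cexp_sgn_false : forall z, Cexp (Cmul (sgnC false) z) = Cinv (Cexp z).
Proof. intros; simpl. rewrite <- Cexp_opp; f_equal; ring. Qed.
Lemma Cexp_2 : forall z, Cexp (Cmul (Cnat 2) z) = Cmul (Cexp z) (Cexp z).
Proof. intros. rewrite <- Cexp_add. f_equal. rewrite !Cnat_S, Cnat_0. ring. Qed.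

Lemma Cpow_inv : forall a n, Cpow (Cinv a) n = Cinv (Cpow a n).
Proof.
  intros a n; induction n; simpl. field. exact C1_neq_C0.
  rewrite IHn, Cinv_mul. reflexivity.
Qed.

Section Params.
Variables (k : nat) (eta hbar : C).
Hypothesis Hk : (1 <= k)%nat.
Hypothesis Hh : hbar = Cmul (Cnat k) eta.

Definition sh := Cexp (Cdiv eta (Cnat 4)).
Definition t1 := Cexp (Cdiv eta (Cnat 2)).
Definition qh := Cexp (Cdiv hbar (Cnat 4)).
Definition q := Cexp (Cdiv hbar (Cnat 2)).
Definition TT := Cexp eta.

Lemma Cnat4_neq0 : Cnat 4 <> C0. Proof. apply Cnat_neq0; lia. Qed.
Lemma Cnat_2 : Cnat 2 = Cadd C1 C1. Proof. rewrite !Cnat_S, Cnat_0; ring. Qed.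
Lemma C2_neq0 : Cadd C1 C1 <> C0. Proof. rewrite <- Cnat_2. exact Cnat2_neq0. Qed.
Hint Resolve C2_neq0 : core.
Lemma Cnat_4 : Cnat 4 = Cadd (Cadd C1 C1) (Cadd C1 C1). Proof. rewrite !Cnat_S, Cnat_0; ring. Qed.

Lemma t1_sh : t1 = Cmul sh sh.
Proof. unfold t1, sh. rewrite <- Cexp_add. f_equal. pose proof Cnat2_neq0. pose proof Cnat4_neq0.
  rewrite Cnat_4 in *; rewrite Cnat_2 in *. field; cnz. Qed.
Lemma q_qh : q = Cmul qh qh.
Proof. unfold q, qh. rewrite <- Cexp_add. f_equal. pose proof Cnat2_neq0. pose proof Cnat4_neq0.
  rewrite Cnat_4 in *; rewrite Cnat_2 in *. field; cnz. Qed.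
Lemma TT_t1 : TT = Cmul t1 t1.
Proof. unfold TT, t1. rewrite <- Cexp_add. f_equal. pose proof Cnat2_neq0.
  rewrite Cnat_2 in *. field; cnz. Qed.
Lemma qh_sh : qh = Cpow sh k.
Proof. unfold qh, sh. rewrite <- Cexp_nat. f_equal. rewrite Hh. pose proof Cnat4_neq0. rewrite Cnat_4 in *. field; cnz. Qed.
Lemma q_t1 : q = Cpow t1 k.
Proof. unfold q, t1. rewrite <- Cexp_nat. f_equal. rewrite Hh. pose proof Cnat2_neq0. rewrite Cnat_2 in *. field; cnz. Qed.
Lemma TTk_q : Cpow TT k = Cmul q q.
Proof. unfold TT, q. rewrite <- Cexp_nat, <- Cexp_add. f_equal. rewrite Hh. pose proof Cnat2_neq0. rewrite Cnat_2 in *. field; cnz. Qed.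
Lemma t1km1 : Cmul (Cpow t1 (k - 1)) t1 = q.
Proof. rewrite q_t1. destruct k as [|k']; [lia|]. replace (S k' - 1)%nat with k' by lia. simpl. ring. Qed.
Lemma invt1km1 : Cpow (Cinv t1) (k - 1) = Cdiv t1 q.
Proof. rewrite Cpow_inv, <- t1km1. unfold t1 at 1. pose proof (Cexp_neq0 (Cdiv eta (Cnat 2))).
  fold t1 in *. pose proof (Cpow_neq0 t1 (k-1) H). field; cnz. Qed.
Lemma invt1k : Cpow (Cinv t1) k = Cinv q.
Proof. rewrite Cpow_inv, q_t1. reflexivity. Qed.
Lemma TTkm1 : Cmul (Cpow TT (k - 1)) TT = Cmul q q.
Proof. rewrite <- TTk_q. destruct k as [|k']; [lia|]. replace (S k' - 1)%nat with k' by lia. simpl. ring. Qed.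

Lemma sh_neq0 : sh <> C0. Proof. apply Cexp_neq0. Qed.
Lemma t1_neq0 : t1 <> C0. Proof. apply Cexp_neq0. Qed.
Lemma qh_neq0 : qh <> C0. Proof. apply Cexp_neq0. Qed.
Lemma q_neq0 : q <> C0. Proof. apply Cexp_neq0. Qed.
Lemma TT_neq0 : TT <> C0. Proof. apply Cexp_neq0. Qed.
End Params.

Lemma Cdiv_split : forall l1 l2 A B, Cdiv (Cmul l1 A) (Cmul l2 B) = Cmul (Cdiv l1 l2) (Cdiv A B).
Proof. intros. unfold Cdiv. rewrite Cinv_mul. ring. Qed.

Lemma gfun_split : forall w a b l1 l2 A B, gden w a = Cmul l1 A -> gden w b = Cmul l2 B ->
  gfun w a b = Cmul (Cdiv l1 l2) (Cdiv A B).
Proof. intros. unfold gfun. rewrite H, H0. apply Cdiv_split. Qed.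

Section Conv.
Variables (sh qh t1 q T : C).
Hypotheses (Hsh : sh <> C0) (Hqh : qh <> C0).
Hypothesis Ht1 : t1 = Cmul sh sh.
Hypothesis Hq : q = Cmul qh qh.
Hypothesis HT : T = Cmul t1 t1.

Lemma t1_nz : t1 <> C0. Proof. rewrite Ht1; apply Cmul_neq0; auto. Qed.
Lemma q_nz : q <> C0. Proof. rewrite Hq; apply Cmul_neq0; auto. Qed.

Lemma convA_minus : forall W Z Y w Tk, W <> C0 -> Y <> C0 -> Cmul W t1 = Cmul Y q ->
  Cexp w = Cdiv Z Y -> Tk = Cmul q q ->
  gfun w (Cmul qh sh) (Cmul (Cinv qh) sh)
  = Cmul (Cinv q) (Cdiv (Csub (Cmul (Cmul Z (Cinv W)) Tk) C1) (Csub (Cmul (Cmul Z (Cinv W)) C1) C1)).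
Proof.
  intros W Z Y w Tk HW HY HWY Hw HTk.
  subst t1 q.
  assert (EY : Y = Cdiv (Cmul W (Cmul sh sh)) (Cmul qh qh)) by (rewrite HWY; field; auto).
  rewrite (gfun_split w _ _ (Cinv (Cmul qh sh)) (Cdiv qh sh)
       (Csub (Cmul (Cmul Z (Cinv W)) Tk) C1) (Csub (Cmul (Cmul Z (Cinv W)) C1) C1)).
  - f_equal. field; cnz.
  - unfold gden. rewrite Hw, HTk, EY. field; cnz.
  - unfold gden. rewrite Hw, EY. field; cnz.
Qed.

Lemma convA_plus : forall W Z Y w Tk, W <> C0 -> Y <> C0 -> Cmul W t1 = Cmul Y q ->
  Cexp w = Cmul Z Y -> Tk = Cmul q q ->
  gfun w (Cmul qh sh) (Cmul (Cinv qh) sh)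
  = Cmul (Cinv q) (Cdiv (Csub (Cmul (Cmul (Cmul Z W) T) (Cinv C1)) C1)
                        (Csub (Cmul (Cmul (Cmul Z W) T) (Cinv Tk)) C1)).
Proof.
  intros W Z Y w Tk HW HY HWY Hw HTk.
  subst T t1 q.
  assert (EY : Y = Cdiv (Cmul W (Cmul sh sh)) (Cmul qh qh)) by (rewrite HWY; field; auto).
  rewrite (gfun_split w _ _ (Cinv (Cmul qh sh)) (Cdiv qh sh)
       (Csub (Cmul (Cmul (Cmul Z W) (Cmul (Cmul sh sh) (Cmul sh sh))) (Cinv C1)) C1)
       (Csub (Cmul (Cmul (Cmul Z W) (Cmul (Cmul sh sh) (Cmul sh sh))) (Cinv Tk)) C1)).
  - f_equal. field; cnz.
  - unfold gden. rewrite Hw, EY. rewrite Cinv_C1. field; cnz.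
  - unfold gden. rewrite Hw, HTk, EY. field; cnz.
Qed.

Lemma convB_minus : forall W Z Ye Y' w Tk, W <> C0 -> Y' <> C0 -> Ye <> C0 ->
  Cmul W t1 = Cmul Y' q -> Cmul Z t1 = Cmul Ye q ->
  Cexp w = Cdiv Ye Y' -> Tk = Cmul q q ->
  gfun w q C1
  = Cmul (Cinv q) (Cdiv (Csub (Cmul (Cmul Z (Cinv W)) Tk) C1) (Csub (Cmul (Cmul Z (Cinv W)) C1) C1)).
Proof.
  intros W Z Ye Y' w Tk HW HY HYe HWY HZY Hw HTk.
  pose proof t1_nz. pose proof q_nz.
  assert (EZ : Z = Cdiv (Cmul Ye q) t1) by (rewrite <- HZY; field; auto).
  assert (EW : W = Cdiv (Cmul Y' q) t1) by (rewrite <- HWY; field; auto).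
  rewrite (gfun_split w _ _ (Cinv q) C1
       (Csub (Cmul (Cmul Z (Cinv W)) Tk) C1) (Csub (Cmul (Cmul Z (Cinv W)) C1) C1)).
  - f_equal. field; cnz.
  - unfold gden. rewrite Hw, HTk, EZ, EW. field; cnz.
  - unfold gden. rewrite Hw, EZ, EW. field; cnz.
Qed.

Lemma convB_plus : forall W Z Ye Y' w Tk, W <> C0 -> Y' <> C0 -> Ye <> C0 ->
  Cmul W t1 = Cmul Y' q -> Cmul Z t1 = Cmul Ye q ->
  Cexp w = Cmul Ye Y' -> Tk = Cmul q q ->
  gfun w q C1
  = Cmul (Cinv q) (Cdiv (Csub (Cmul (Cmul (Cmul Z W) T) (Cinv C1)) C1)
                        (Csub (Cmul (Cmul (Cmul Z W) T) (Cinv Tk)) C1)).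
Proof.
  intros W Z Ye Y' w Tk HW HY HYe HWY HZY Hw HTk.
  pose proof t1_nz. pose proof q_nz.
  assert (EZ : Z = Cdiv (Cmul Ye q) t1) by (rewrite <- HZY; field; auto).
  assert (EW : W = Cdiv (Cmul Y' q) t1) by (rewrite <- HWY; field; auto).
  rewrite (gfun_split w _ _ (Cinv q) C1
       (Csub (Cmul (Cmul (Cmul Z W) T) (Cinv C1)) C1)
       (Csub (Cmul (Cmul (Cmul Z W) T) (Cinv Tk)) C1)).
  - f_equal. field; cnz.
  - unfold gden. rewrite Hw, EZ, EW, HT, Cinv_C1. field; cnz.
  - unfold gden. rewrite Hw, HTk, EZ, EW, HT. field; cnz.
Qed.

Lemma convBN1 : forall Z Ye X z zy xj, Ye <> C0 -> X <> C0 ->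
  Cexp z = Z -> Cexp zy = Ye -> Cexp xj = X -> Cmul Z t1 = Cmul Ye q ->
  Cmul (gfun (Csub z xj) t1 C1) (gfun (Cadd z xj) t1 C1)
  = Cmul (gfun (Csub zy xj) (Cmul qh sh) (Cmul qh (Cinv sh)))
         (gfun (Cadd zy xj) (Cmul qh sh) (Cmul qh (Cinv sh))).
Proof.
  intros Z Ye X z zy xj HYe HX Hz Hzy Hx HZY.
  pose proof t1_nz. pose proof q_nz.
  assert (EZ : Z = Cdiv (Cmul Ye q) t1) by (rewrite <- HZY; field; auto).
  unfold gfun. f_equal.
  - symmetry; apply Cdiv_scale with (Cdiv sh qh); [apply Cmul_neq0; auto; apply Cinv_neq0; auto| |];
    unfold gden; rewrite !Cexp_sub, Hz, Hzy, Hx, EZ; subst t1 q; field; cnz.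
  - symmetry; apply Cdiv_scale with (Cdiv sh qh); [apply Cmul_neq0; auto; apply Cinv_neq0; auto| |];
    unfold gden; rewrite !Cexp_add, Hz, Hzy, Hx, EZ; subst t1 q; field; cnz.
Qed.
End Conv.

Definition BdK (q t0 tn u0 un ex e2x : C) : C :=
  Cdiv (Cmul (Cmul (Csub C1 (Cmul (Cmul (Cmul t0 u0) (Cinv q)) ex))
                  (Cadd C1 (Cmul (Cmul (Cmul t0 (Cinv u0)) (Cinv q)) ex)))
            (Cmul (Csub C1 (Cmul (Cmul tn un) ex))
                  (Cadd C1 (Cmul (Cmul tn (Cinv un)) ex))))
      (Cmul (Csub C1 (Cmul (Cmul (Cinv q) (Cinv q)) e2x)) (Csub C1 e2x)).

Definition BdB (q s a b c d ey e2y : C) : C :=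
  Cdiv (Cprod [a; b; c; d] (fun p => Csub C1 (Cmul (Cmul (Cmul p q) (Cinv s)) ey)))
       (Cmul (Csub C1 (Cmul (Cinv (Cmul s s)) e2y)) (Csub C1 e2y)).

Lemma own_final : forall t1 q Z Ye P t0 tn u0 un,
  t1 <> C0 -> q <> C0 -> Ye <> C0 -> u0 <> C0 -> un <> C0 ->
  Cmul Z t1 = Cmul Ye q ->
  Cmul (Cmul P (Csub (Cmul t1 t1) C1)) (Csub (Cmul Ye Ye) C1)
    = Cmul (Cmul (Cdiv t1 q) (Cdiv t1 q)) (Cmul (Csub (Cmul q q) C1) (Csub (Cmul Z Z) C1)) ->
  Csub (Cmul t1 t1) C1 <> C0 -> Csub C1 (Cmul Ye Ye) <> C0 -> Csub C1 (Cmul Z Z) <> C0 ->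
  Csub C1 (Cmul (Cinv (Cmul t1 t1)) (Cmul Ye Ye)) <> C0 ->
  Cmul P (BdK q t0 tn u0 un Z (Cmul Z Z))
  = Cmul (Cdiv (Csub C1 (Cinv (Cmul q q))) (Csub C1 (Cinv (Cmul t1 t1))))
         (BdB q t1 (Cmul (Cmul t0 u0) (Cinv q)) (Copp (Cmul (Cmul t0 (Cinv u0)) (Cinv q)))
              (Cmul tn un) (Copp (Cmul tn (Cinv un))) Ye (Cmul Ye Ye)).
Proof.
  intros t1 q Z Ye P t0 tn u0 un Ht1 Hq HYe Hu0 Hun HZY HP H1 H2 H3 H4.
  assert (EZ : Z = Cdiv (Cmul Ye q) t1) by (rewrite <- HZY; field; auto).
  assert (H2' : Csub (Cmul Ye Ye) C1 <> C0).
  { intro E. apply H2. replace (Csub C1 (Cmul Ye Ye)) with (Copp (Csub (Cmul Ye Ye) C1)) by ring.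
    rewrite E; ring. }
  assert (EP : P = Cdiv (Cmul (Cmul (Cdiv t1 q) (Cdiv t1 q)) (Cmul (Csub (Cmul q q) C1) (Csub (Cmul Z Z) C1)))
                   (Cmul (Csub (Cmul t1 t1) C1) (Csub (Cmul Ye Ye) C1))).
  { rewrite <- HP. field. auto. }
  assert (H3' : Csub C1 (Cmul (Cmul (Cinv q) (Cinv q)) (Cmul Z Z)) <> C0).
  { replace (Csub C1 (Cmul (Cmul (Cinv q) (Cinv q)) (Cmul Z Z))) with (Csub C1 (Cmul (Cinv (Cmul t1 t1)) (Cmul Ye Ye))); auto.
    rewrite EZ. field. auto. }
  unfold BdK, BdB. simpl Cprod.
  rewrite EP.
  assert (H4' : Csub (Cmul t1 t1) (Cmul Ye Ye) <> C0).
  { intro E. apply H4. replace (Csub C1 (Cmul (Cinv (Cmul t1 t1)) (Cmul Ye Ye)))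
      with (Cmul (Cinv (Cmul t1 t1)) (Csub (Cmul t1 t1) (Cmul Ye Ye))) by (field; auto).
    rewrite E; ring. }
  assert (H3'' : Csub (Cmul t1 t1) (Cmul (Cmul Ye q) (Cmul Ye q)) <> C0).
  { intro E. apply H3. replace (Csub C1 (Cmul Z Z))
      with (Cmul (Cinv (Cmul t1 t1)) (Csub (Cmul t1 t1) (Cmul (Cmul Ye q) (Cmul Ye q)))) by (rewrite EZ; field; auto).
    rewrite E; ring. }
  rewrite EZ in *. field. repeat split; auto.
Qed.

Lemma sum_ind : forall B j v c a,
  Csum (seq a c) (fun s => if Nat.eqb (B + s) j then v else C0)
  = if ((B + a <=? j) && (j <? B + a + c))%nat then v else C0.
Proof.
  intros B j v c; induction c; intros a.
  - simpl. destruct ((B + a <=? j))%nat eqn:E1; destruct (j <? B + a + 0)%nat eqn:E2; simpl; auto.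
    apply Nat.leb_le in E1; apply Nat.ltb_lt in E2; lia.
  - simpl seq. rewrite Csum_cons, IHc.
    destruct (Nat.eqb_spec (B + a) j) as [E|E].
    + subst j. replace ((B + S a <=? B + a))%nat with false by (symmetry; apply Nat.leb_gt; lia).
      replace ((B + a <=? B + a) && (B + a <? B + a + S c))%nat with true
        by (symmetry; apply andb_true_intro; split; [apply Nat.leb_le| apply Nat.ltb_lt]; lia).
      simpl; ring.
    + replace ((B + S a <=? j) && (j <? B + S a + c))%nat with ((B + a <=? j) && (j <? B + a + S c))%nat.
      { ring. }
      destruct (B + a <=? j)%nat eqn:E1; destruct (B + S a <=? j)%nat eqn:E3;
      destruct (j <? B + a + S c)%nat eqn:E2; destruct (j <? B + S a + c)%nat eqn:E4; simpl; auto;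
      repeat match goal with H : (_ <=? _)%nat = true |- _ => apply Nat.leb_le in H
                        | H : (_ <=? _)%nat = false |- _ => apply Nat.leb_gt in H
                        | H : (_ <? _)%nat = true |- _ => apply Nat.ltb_lt in H
                        | H : (_ <? _)%nat = false |- _ => apply Nat.ltb_ge in H end; lia.
Qed.

Lemma chart_zero : forall N1 k m hbar x,
  chartD0 N1 k m (fun j => Csub (x j) (Cmul hbar (projS0 N1 k m zerovec j))) = chartD0 N1 k m x.
Proof.
  intros. f_equal. apply functional_extensionality. intros p.
  unfold projS0, zerovec.
  destruct ((1 <=? p) && (p <=? N1))%nat; [ring|].
  destruct ((N1 <? p) && (p <=? N1 + m * k))%nat; [|ring].
  rewrite Csum_zero by auto. ring.
Qed.

Lemma chart_shift_x : forall N1 k m hbar x i (e : bool), (1 <= i <= N1)%nat -> (1 <= k)%nat ->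
  chartD0 N1 k m (fun j => Csub (x j) (Cmul hbar (projS0 N1 k m (unitvec i e) j)))
  = (shift_at (fst (chartD0 N1 k m x)) i (Cmul (sgnC e) hbar), snd (chartD0 N1 k m x)).
Proof.
  intros N1 k m hbar x i e Hi Hk.
  unfold chartD0 at 1. f_equal.
  - apply functional_extensionality. intros p. unfold shift_at, chartD0; cbv beta iota delta [fst].
    unfold projS0, unitvec.
    destruct ((1 <=? p) && (p <=? N1))%nat eqn:E.
    + destruct (Nat.eqb_spec p i); ring.
    + destruct (Nat.eqb_spec p i); [|reflexivity].
      subst. exfalso. rewrite (proj2 (Nat.leb_le 1 i)), (proj2 (Nat.leb_le i N1)) in E by lia. discriminate.
  - apply functional_extensionality. intros l. unfold chartD0; cbv beta iota delta [snd].
    destruct ((1 <=? l) && (l <=? m))%nat eqn:E; [|reflexivity].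
    apply andb_prop in E as [E1 E2]. apply Nat.leb_le in E1. apply Nat.leb_le in E2.
    f_equal. apply Csum_ext. intros s Hs. apply in_seq in Hs.
    unfold projS0.
    replace ((1 <=? N1 + k * l - s) && (N1 + k * l - s <=? N1))%nat with false
      by (symmetry; apply andb_false_iff; right; apply Nat.leb_gt; nia).
    destruct ((N1 <? N1 + k * l - s) && (N1 + k * l - s <=? N1 + m * k))%nat; [|ring].
    unfold unitvec. rewrite Csum_zero; [ring|].
    intros s' Hs'. unfold rng in Hs'. apply in_seq in Hs'.
    destruct (Nat.eqb_spec (N1 + k * ((N1 + k * l - s - N1 - 1) / k) + s') i); [lia|reflexivity].
Qed.

Lemma chart_shift_y : forall N1 k m eta hbar x l r (e : bool), (1 <= l <= m)%nat -> (r < k)%nat ->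
  (1 <= k)%nat -> hbar = Cmul (Cnat k) eta ->
  chartD0 N1 k m (fun p => Csub (x p) (Cmul hbar (projS0 N1 k m (unitvec (N1 + k * (l - 1) + 1 + r) e) p)))
  = (fst (chartD0 N1 k m x), shift_at (snd (chartD0 N1 k m x)) l (Cmul (sgnC e) eta)).
Proof.
  intros N1 k m eta hbar x l r e Hl Hr Hk Hh.
  set (j := (N1 + k * (l - 1) + 1 + r)%nat).
  unfold chartD0 at 1. f_equal.
  - apply functional_extensionality. intros p. unfold chartD0; cbv beta iota delta [fst].
    unfold projS0, unitvec.
    destruct ((1 <=? p) && (p <=? N1))%nat eqn:E; [|reflexivity].
    apply andb_prop in E as [E1 E2]. apply Nat.leb_le in E2.
    destruct (Nat.eqb_spec p j); [unfold j in *; nia| ring].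
  - apply functional_extensionality. intros l'. unfold shift_at, chartD0; cbv beta iota delta [snd].
    destruct ((1 <=? l') && (l' <=? m))%nat eqn:E.
    2:{ destruct (Nat.eqb_spec l' l); [|reflexivity]. subst. exfalso.
        rewrite (proj2 (Nat.leb_le 1 l)), (proj2 (Nat.leb_le l m)) in E by lia. discriminate. }
    apply andb_prop in E as [E1 E2]. apply Nat.leb_le in E1. apply Nat.leb_le in E2.
    set (v := if Nat.eqb l' l then sgnC e else C0).
    rewrite (Csum_ext _ _ (fun s => Csub (x (N1 + k * l' - s)%nat) (Cmul hbar (Cmul (Cinv (Cnat k)) v)))).
    2:{ intros s Hs. apply in_seq in Hs. f_equal. f_equal. unfold projS0.
        replace ((1 <=? N1 + k * l' - s) && (N1 + k * l' - s <=? N1))%nat with false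
          by (symmetry; apply andb_false_iff; right; apply Nat.leb_gt; nia).
        replace ((N1 <? N1 + k * l' - s) && (N1 + k * l' - s <=? N1 + m * k))%nat with true
          by (symmetry; apply andb_true_intro; split; [apply Nat.ltb_lt| apply Nat.leb_le]; nia).
        f_equal.
        replace ((N1 + k * l' - s - N1 - 1) / k)%nat with (l' - 1)%nat.
        2:{ apply Nat.div_unique with (k - 1 - s)%nat; [lia|].
            destruct l' as [|l'']; [lia|]. replace (S l'' - 1)%nat with l'' by lia. nia. }
        unfold unitvec, rng. rewrite sum_ind.
        unfold v. destruct (Nat.eqb_spec l' l).
        - subst l'. replace ((N1 + k * (l - 1) + 1 <=? j) && (j <? N1 + k * (l - 1) + 1 + k))%nat with true; [reflexivity|].
          symmetry; apply andb_true_intro; split; [apply Nat.leb_le| apply Nat.ltb_lt]; unfold j; lia.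
        - replace ((N1 + k * (l' - 1) + 1 <=? j) && (j <? N1 + k * (l' - 1) + 1 + k))%nat with false; [reflexivity|].
          symmetry; apply andb_false_iff.
          destruct (Nat.lt_total l l') as [Hlt|[Heq|Hlt]]; [left|lia|right].
          + apply Nat.leb_gt. unfold j.
            assert (k * l <= k * (l' - 1))%nat by (apply Nat.mul_le_mono_l; lia). nia.
          + apply Nat.ltb_ge. unfold j.
            assert (k * l' <= k * (l - 1))%nat by (apply Nat.mul_le_mono_l; lia). nia. }
    rewrite Csum_sub, Csum_const, length_seq.
    assert (Hk0 : Cnat k <> C0) by (apply Cnat_neq0; lia).
    unfold v. destruct (Nat.eqb_spec l' l); subst hbar; field; auto.
Qed.


Definition hK (t : C) (z v : C) : C := Cmul (gfun (Csub z v) t C1) (gfun (Cadd z v) t C1).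

Section Main.
Variables (n k m : nat) (eta hbar : C) (x : Vec).
Hypothesis Hk : (2 <= k)%nat.
Hypothesis Hm : (1 <= m)%nat.
Hypothesis Hn : (m * k <= n)%nat.
Hypothesis Hh : hbar = Cmul (Cnat k) eta.
Local Notation N1 := (n - m * k)%nat.
Hypothesis HD : inD0 N1 k m eta x.

Local Notation T := (TT eta).
Local Notation tt := (t1 eta).
Local Notation qq := (q hbar).
Local Notation Bk l := (N1 + k * (l - 1))%nat.
Definition Wb (l : nat) := Cexp (x (Bk l + 1)%nat).
Definition Yb (l : nat) := Cexp (snd (chartD0 N1 k m x) l).

Lemma Wb_neq0 : forall l, Wb l <> C0. Proof. intros; apply Cexp_neq0. Qed.
Lemma Yb_neq0 : forall l, Yb l <> C0. Proof. intros; apply Cexp_neq0. Qed.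

Lemma xblk_exp : forall l r, (1 <= l <= m)%nat -> (r < k)%nat ->
  Cexp (x (Bk l + 1 + r)%nat) = Cmul (Wb l) (Cinv (Cpow T r)).
Proof.
  intros l r Hl Hr. rewrite (D0_blk n k m eta x Hk HD l r Hl Hr).
  rewrite Cexp_sub, Cexp_nat. reflexivity.
Qed.

Lemma WY : forall l, (1 <= l <= m)%nat -> Cmul (Wb l) tt = Cmul (Yb l) qq.
Proof.
  intros l Hl. unfold Yb. rewrite (chart_y n k m eta x Hk HD l Hl).
  rewrite Cexp_sub. fold (Wb l).
  assert (E : Cexp (Cmul (Cdiv (Cnat (k - 1)) (Cnat 2)) eta) = Cpow tt (k - 1)).
  { unfold t1. rewrite <- Cexp_nat. f_equal. pose proof Cnat2_neq0. field. auto. }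
  rewrite E, <- (t1km1 k eta hbar) by (auto || lia).
  pose proof (Cpow_neq0 tt (k-1) (t1_neq0 eta)). field. auto.
Qed.

Lemma xs_eq : forall j, (1 <= j <= N1)%nat -> fst (chartD0 N1 k m x) j = x j.
Proof.
  intros j Hj. unfold chartD0; cbv beta iota delta [fst].
  replace ((1 <=? j)%nat && (j <=? N1)%nat)%bool with true
    by (symmetry; apply andb_true_intro; split; apply Nat.leb_le; lia).
  reflexivity.
Qed.

Lemma Hb_val : forall l z, (1 <= l <= m)%nat ->
  (forall r, (r < k)%nat -> alm T (Cexp z) (Wb l) r <> C0) ->
  (forall r, (0 < r <= k)%nat -> bep T (Cexp z) (Wb l) r <> C0) ->
  Cprod (seq (Bk l + 1) k) (fun j => hK tt z (x j))
  = Cmul (Cmul (Cinv qq) (Cdiv (alm T (Cexp z) (Wb l) k) (alm T (Cexp z) (Wb l) 0)))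
         (Cmul (Cinv qq) (Cdiv (bep T (Cexp z) (Wb l) 0) (bep T (Cexp z) (Wb l) k))).
Proof.
  intros l z Hl Ha Hb.
  rewrite <- (Nat.add_0_r (Bk l + 1)), Cprod_seq_shift.
  pose proof (block_prod tt T (Cexp z) (Wb l) (fun r => x (Bk l + 1 + r)%nat) z (t1_neq0 eta)
     (TT_t1 eta) (Wb_neq0 l) eq_refl 0 k) as H.
  rewrite !Nat.add_0_l in H.
  specialize (H (fun r Hr => xblk_exp l r Hl ltac:(lia))
                (fun r Hr => Ha r ltac:(lia)) (fun r Hr => Hb r ltac:(lia))).
  rewrite (invt1k k eta hbar) in H by (auto || lia).
  assert (H0 := Ha 0%nat ltac:(lia)). assert (Hkk := Hb k ltac:(lia)).
  unfold hK.
  set (P := Cprod _ _) in *.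
  replace P with (Cdiv (Cmul (Cmul P (alm T (Cexp z) (Wb l) 0)) (bep T (Cexp z) (Wb l) k))
                       (Cmul (alm T (Cexp z) (Wb l) 0) (bep T (Cexp z) (Wb l) k)))
    by (field; auto).
  rewrite H. pose proof (q_neq0 hbar). field. auto.
Qed.

Hypothesis HK : K_good n hbar tt x.

Lemma in_rng_blk : forall l r, (1 <= l <= m)%nat -> (r < k)%nat -> In (Bk l + 1 + r)%nat (rng n).
Proof.
  intros l r Hl Hr. unfold rng. apply in_seq.
  assert (k * (l - 1) + k <= m * k)%nat by (destruct l; [lia|]; replace (S l - 1)%nat with l by lia; nia).
  nia.
Qed.

Lemma Kg_alm : forall i e l r, In i (rng n) -> (1 <= l <= m)%nat -> (r < k)%nat ->
  (Bk l + 1 + r)%nat <> i ->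
  alm T (Cexp (Cmul (sgnC e) (x i))) (Wb l) r <> C0.
Proof.
  intros i e l r Hi Hl Hr Hne.
  destruct HK as [_ HK2]. destruct (HK2 i e Hi) as [HK3 _].
  destruct (HK3 _ (in_rng_blk l r Hl Hr) Hne) as [HA _].
  rewrite <- (gden_minus tt T (Cexp (Cmul (sgnC e) (x i))) (Wb l) (fun r => x (Bk l + 1 + r)%nat)
               (Cmul (sgnC e) (x i)) (t1_neq0 eta) (TT_t1 eta) (Wb_neq0 l) eq_refl r
               (xblk_exp l r Hl Hr)).
  exact HA.
Qed.

Lemma Kg_bep : forall i e l r, In i (rng n) -> (1 <= l <= m)%nat -> (r < k)%nat ->
  (Bk l + 1 + r)%nat <> i ->
  bep T (Cexp (Cmul (sgnC e) (x i))) (Wb l) (S r) <> C0.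
Proof.
  intros i e l r Hi Hl Hr Hne.
  destruct HK as [_ HK2]. destruct (HK2 i e Hi) as [HK3 _].
  destruct (HK3 _ (in_rng_blk l r Hl Hr) Hne) as [_ HB].
  rewrite <- (gden_plus tt T (Cexp (Cmul (sgnC e) (x i))) (Wb l) (fun r => x (Bk l + 1 + r)%nat)
               (Cmul (sgnC e) (x i)) (t1_neq0 eta) (TT_t1 eta) eq_refl r
               (xblk_exp l r Hl Hr)).
  exact HB.
Qed.

Lemma Hb_out : forall i e l, In i (rng n) -> (1 <= l <= m)%nat ->
  (forall r, (r < k)%nat -> (Bk l + 1 + r)%nat <> i) ->
  Cprod (seq (Bk l + 1) k) (fun j => hK tt (Cmul (sgnC e) (x i)) (x j))
  = Cmul (Cmul (Cinv qq) (Cdiv (alm T (Cexp (Cmul (sgnC e) (x i))) (Wb l) k) (alm T (Cexp (Cmul (sgnC e) (x i))) (Wb l) 0)))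
         (Cmul (Cinv qq) (Cdiv (bep T (Cexp (Cmul (sgnC e) (x i))) (Wb l) 0) (bep T (Cexp (Cmul (sgnC e) (x i))) (Wb l) k))).
Proof.
  intros i e l Hi Hl Hout. apply Hb_val; auto.
  - intros r Hr. apply Kg_alm; auto.
  - intros r Hr. replace r with (S (r - 1)) by lia. apply Kg_bep; auto; [lia | apply Hout; lia].
Qed.

Variables (t0 tn u0 un : C).
Hypotheses (Ht0 : t0 <> C0) (Htn : tn <> C0) (Hu0 : u0 <> C0) (Hun : un <> C0).
Local Notation aa := (Cmul (Cmul t0 u0) (Cinv qq)).
Local Notation bb := (Copp (Cmul (Cmul t0 (Cinv u0)) (Cinv qq))).
Local Notation cc := (Cmul tn un).
Local Notation dd := (Copp (Cmul tn (Cinv un))).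
Local Notation xs := (fst (chartD0 N1 k m x)).
Local Notation ys := (snd (chartD0 N1 k m x)).

Lemma K_coef_eq : forall i e, K_coef n hbar t0 tt tn u0 un i e x
  = Cmul (Cinv (Cmul t0 tn))
     (Cmul (Cprod (rng n) (fun j => if Nat.eqb j i then C1 else hK tt (Cmul (sgnC e) (x i)) (x j)))
           (BdK qq t0 tn u0 un (Cexp (Cmul (sgnC e) (x i)))
                (Cmul (Cexp (Cmul (sgnC e) (x i))) (Cexp (Cmul (sgnC e) (x i)))))).
Proof. intros. unfold K_coef, BdK, hK. cbv zeta. rewrite Cexp_2. reflexivity. Qed.

Lemma A_case : forall i e, (1 <= i <= N1)%nat ->
  K_coef n hbar t0 tt tn u0 un i e x
  = Cmul (Cinv (Cmul t0 tn)) (A_coef N1 m hbar eta aa bb cc dd i e xs ys).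
Proof.
  intros i e Hi.
  assert (Hin : In i (rng n)) by (unfold rng; apply in_seq; lia).
  rewrite K_coef_eq. unfold A_coef. cbv zeta. rewrite Cexp_2.
  rewrite (xs_eq i Hi).
  rewrite (rng_split n k m Hn), Cprod_app, Cprod_flat_map.
  match goal with |- Cmul ?I (Cmul (Cmul ?P1 ?P2) ?BK) = Cmul ?I' (Cmul ?A1 (Cmul ?A2 ?BA)) =>
    transitivity (Cmul I (Cmul P1 (Cmul P2 BK))); [ring|]; f_equal; f_equal; [|f_equal] end.
  - apply Cprod_ext. intros j Hj. unfold rng in Hj; apply in_seq in Hj.
    rewrite (xs_eq j) by lia. reflexivity.
  - apply Cprod_ext. intros l Hl. unfold rng in Hl; apply in_seq in Hl.
    rewrite (Cprod_ext _ _ (fun j => hK tt (Cmul (sgnC e) (x i)) (x j))).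
    2:{ intros j Hj. apply in_seq in Hj. destruct (Nat.eqb_spec j i); [nia|reflexivity]. }
    rewrite (Hb_out i e l Hin ltac:(lia)) by nia.
    f_equal.
    + symmetry. apply (convA_minus (sh eta) (qh hbar) tt qq T (sh_neq0 eta) (qh_neq0 hbar) (t1_sh k eta ltac:(lia)) (q_qh k hbar ltac:(lia)) (TT_t1 eta)
         (Wb l) (Cexp (Cmul (sgnC e) (x i))) (Yb l)); auto using Wb_neq0, Yb_neq0.
      * apply WY; lia.
      * rewrite Cexp_sub. reflexivity.
      * apply TTk_q; auto; lia.
    + symmetry. apply (convA_plus (sh eta) (qh hbar) tt qq T (sh_neq0 eta) (qh_neq0 hbar) (t1_sh k eta ltac:(lia)) (q_qh k hbar ltac:(lia)) (TT_t1 eta)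
         (Wb l) (Cexp (Cmul (sgnC e) (x i))) (Yb l)); auto using Wb_neq0, Yb_neq0.
      * apply WY; lia.
      * rewrite Cexp_add. reflexivity.
      * apply TTk_q; auto; lia.
  - unfold BdK. simpl Cprod. change (Cexp (Cdiv hbar (Cnat 2))) with qq. rewrite (Cinv_mul qq qq). unfold Cdiv. f_equal; ring.
Qed.

Lemma own_first : forall l, (1 <= l <= m)%nat ->
  Cmul (Cmul (Cprod (seq (Bk l + 1) k) (fun j => if Nat.eqb j (Bk l + 1) then C1
                 else hK tt (Cmul (sgnC true) (x (Bk l + 1)%nat)) (x j)))
             (Csub (Cmul tt tt) C1)) (Csub (Cmul (Yb l) (Yb l)) C1)
  = Cmul (Cmul (Cdiv tt qq) (Cdiv tt qq))
         (Cmul (Csub (Cmul qq qq) C1)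
               (Csub (Cmul (Cexp (Cmul (sgnC true) (x (Bk l + 1)%nat))) (Cexp (Cmul (sgnC true) (x (Bk l + 1)%nat)))) C1)).
Proof.
  intros l Hl.
  set (i := (Bk l + 1)%nat).
  assert (Hin : In i (rng n)) by (unfold i; rewrite <- (Nat.add_0_r (Bk l + 1)); apply in_rng_blk; lia).
  set (z := Cmul (sgnC true) (x i)).
  assert (HZW : Cexp z = Wb l) by (unfold z; rewrite Cexp_sgn_true; reflexivity).
  replace k with (S (k - 1)) at 1 by lia.
  rewrite <- cons_seq, Cprod_cons, Nat.eqb_refl.
  rewrite (Cprod_ext _ _ (fun j => hK tt z (x j))).
  2:{ intros j Hj. apply in_seq in Hj. destruct (Nat.eqb_spec j i); [unfold i in *; lia|reflexivity]. }
  replace (S i) with (Bk l + 1 + 1)%nat by (unfold i; lia).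
  rewrite Cprod_seq_shift.
  pose proof (block_prod tt T (Cexp z) (Wb l) (fun r => x (Bk l + 1 + r)%nat) z (t1_neq0 eta)
     (TT_t1 eta) (Wb_neq0 l) eq_refl 1 (k - 1)) as H.
  replace (1 + (k - 1))%nat with k in H by lia.
  specialize (H (fun r Hr => xblk_exp l r Hl ltac:(lia))).
  specialize (H (fun r Hr => Kg_alm i true l r Hin Hl ltac:(lia) ltac:(unfold i; lia))).
  assert (Hb : forall r, (1 < r <= k)%nat -> bep T (Cexp z) (Wb l) r <> C0).
  { intros r Hr. replace r with (S (r - 1)) by lia. apply Kg_bep; auto; unfold i; lia. }
  specialize (H Hb).
  rewrite (invt1km1 k eta hbar) in H by (auto || lia).
  unfold hK. fold i.
  set (P := Cprod _ _) in *.
  rewrite HZW in H.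
  unfold alm, bep in H. simpl Cpow in H.
  rewrite (TTk_q k eta hbar Hh) in H.
  pose proof (WY l Hl) as HWY.
  rewrite HZW.
  pose proof (Wb_neq0 l). pose proof (Yb_neq0 l). pose proof (t1_neq0 eta). pose proof (q_neq0 hbar).
  pose proof (TT_neq0 eta).
  assert (EY : Yb l = Cdiv (Cmul (Wb l) tt) qq) by (rewrite HWY; field; auto).
  rewrite EY. rewrite (TT_t1 eta) in H.
  replace (Csub (Cmul (Cdiv (Cmul (Wb l) tt) qq) (Cdiv (Cmul (Wb l) tt) qq)) C1)
    with (Csub (Cmul (Cmul (Cmul (Wb l) (Wb l)) (Cmul tt tt)) (Cinv (Cmul qq qq))) C1) by (field; auto).
  replace (Csub (Cmul tt tt) C1) with (Csub (Cmul (Cmul (Wb l) (Cinv (Wb l))) (Cmul (Cmul tt tt) C1)) C1)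
    by (field; auto).
  replace (Cmul C1 P) with P by ring. rewrite H. field. auto.
Qed.

Lemma own_last : forall l, (1 <= l <= m)%nat ->
  Cmul (Cmul (Cprod (seq (Bk l + 1) k) (fun j => if Nat.eqb j (Bk l + 1 + (k - 1)) then C1
                 else hK tt (Cmul (sgnC false) (x (Bk l + 1 + (k - 1))%nat)) (x j)))
             (Csub (Cmul tt tt) C1))
       (Csub (Cmul (Cexp (Cmul (sgnC false) (snd (chartD0 N1 k m x) l)))
                   (Cexp (Cmul (sgnC false) (snd (chartD0 N1 k m x) l)))) C1)
  = Cmul (Cmul (Cdiv tt qq) (Cdiv tt qq))
         (Cmul (Csub (Cmul qq qq) C1)
               (Csub (Cmul (Cexp (Cmul (sgnC false) (x (Bk l + 1 + (k - 1))%nat)))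
                           (Cexp (Cmul (sgnC false) (x (Bk l + 1 + (k - 1))%nat)))) C1)).
Proof.
  intros l Hl.
  set (i := (Bk l + 1 + (k - 1))%nat).
  assert (Hin : In i (rng n)) by (unfold i; apply in_rng_blk; lia).
  set (z := Cmul (sgnC false) (x i)).
  assert (Hseq : seq (Bk l + 1) k = seq (Bk l + 1) (k - 1) ++ [i]).
  { unfold i. rewrite <- seq_S. f_equal. lia. }
  rewrite Hseq, Cprod_app.
  simpl (Cprod [i] _). rewrite Nat.eqb_refl.
  rewrite (Cprod_ext _ _ (fun j => hK tt z (x j))).
  2:{ intros j Hj. apply in_seq in Hj. destruct (Nat.eqb_spec j i); [unfold i in *; lia|reflexivity]. }
  rewrite <- (Nat.add_0_r (Bk l + 1)) at 1.
  rewrite Cprod_seq_shift.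
  pose proof (block_prod tt T (Cexp z) (Wb l) (fun r => x (Bk l + 1 + r)%nat) z (t1_neq0 eta)
     (TT_t1 eta) (Wb_neq0 l) eq_refl 0 (k - 1)) as H.
  rewrite !Nat.add_0_l in H.
  specialize (H (fun r Hr => xblk_exp l r Hl ltac:(lia))).
  specialize (H (fun r Hr => Kg_alm i false l r Hin Hl ltac:(lia) ltac:(unfold i; lia))).
  assert (Hb : forall r, (0 < r <= k - 1)%nat -> bep T (Cexp z) (Wb l) r <> C0).
  { intros r Hr. replace r with (S (r - 1)) by lia. apply Kg_bep; auto; unfold i; lia. }
  specialize (H Hb).
  rewrite (invt1km1 k eta hbar) in H by (auto || lia).
  unfold hK.
  set (P := Cprod (seq 0 (k - 1)) _) in *.
  unfold alm, bep in H. simpl Cpow in H.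
  pose proof (WY l Hl) as HWY.
  pose proof (Wb_neq0 l). pose proof (Yb_neq0 l). pose proof (t1_neq0 eta). pose proof (q_neq0 hbar).
  pose proof (TT_neq0 eta).
  assert (HZ : Cexp z = Cinv (Cmul (Wb l) (Cinv (Cpow T (k - 1))))).
  { unfold z, i. rewrite Cexp_sgn_false, xblk_exp by lia. reflexivity. }
  assert (HTk : Cpow T (k - 1) = Cdiv (Cmul qq qq) (Cmul tt tt)).
  { rewrite <- (TTkm1 k eta hbar) by (auto || lia). rewrite (TT_t1 eta). field. auto. }
  assert (HYe : Cexp (Cmul (sgnC false) (snd (chartD0 N1 k m x) l)) = Cinv (Yb l))
    by (rewrite Cexp_sgn_false; reflexivity).
  assert (EY : Yb l = Cdiv (Cmul (Wb l) tt) qq) by (rewrite HWY; field; auto).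
  rewrite HYe, EY. fold z. rewrite HZ. rewrite HZ in H.
  rewrite HTk in *. rewrite (TT_t1 eta) in H.
  set (W := Wb l) in *. set (Q2 := Cdiv (Cmul qq qq) (Cmul tt tt)) in *.
  assert (HQ2 : Q2 <> C0) by (unfold Q2; apply Cmul_neq0; [apply Cmul_neq0; auto| apply Cinv_neq0; apply Cmul_neq0; auto]).
  replace (Cmul (Cmul (Cmul P (Cmul C1 C1)) (Csub (Cmul tt tt) C1))
               (Csub (Cmul (Cinv (Cdiv (Cmul W tt) qq)) (Cinv (Cdiv (Cmul W tt) qq))) C1))
    with (Cmul (Cmul P (Csub (Cmul (Cmul (Cinv (Cmul W (Cinv Q2))) (Cinv W)) C1) C1))
               (Csub (Cmul (Cmul (Cmul (Cinv (Cmul W (Cinv Q2))) W) (Cmul tt tt)) (Cinv Q2)) C1)).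
  2:{ unfold Q2; field; repeat split; auto; exact C1_neq_C0. }
  rewrite H. unfold Q2. field. repeat split; auto; exact C1_neq_C0.
Qed.

Hypothesis HM : M_good N1 m hbar eta (chartD0 N1 k m x).
Local Notation ratio := (Cdiv (Csub C1 (Cinv (Cmul qq qq))) (Csub C1 (Cinv (Cmul tt tt)))).

Lemma ZY_last : forall l, (1 <= l <= m)%nat ->
  Cmul (Cexp (Cmul (sgnC false) (x (Bk l + 1 + (k - 1))%nat))) tt
  = Cmul (Cexp (Cmul (sgnC false) (ys l))) qq.
Proof.
  intros l Hl. rewrite !Cexp_sgn_false, xblk_exp by lia. fold (Yb l).
  pose proof (WY l Hl) as HWY.
  pose proof (Wb_neq0 l). pose proof (Yb_neq0 l). pose proof (t1_neq0 eta). pose proof (q_neq0 hbar).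
  assert (HTk : Cpow T (k - 1) = Cdiv (Cmul qq qq) (Cmul tt tt)).
  { rewrite <- (TTkm1 k eta hbar) by (auto || lia). rewrite (TT_t1 eta). field. auto. }
  assert (EY : Yb l = Cdiv (Cmul (Wb l) tt) qq) by (rewrite HWY; field; auto).
  rewrite HTk, EY. field. auto.
Qed.

Lemma B_case : forall l (e : bool) i, (1 <= l <= m)%nat ->
  i = (if e then (Bk l + 1)%nat else (Bk l + 1 + (k - 1))%nat) ->
  K_coef n hbar t0 tt tn u0 un i e x
  = Cmul (Cinv (Cmul t0 tn)) (Cmul ratio (B_coef N1 m hbar eta aa bb cc dd l e xs ys)).
Proof.
  intros l e i Hl Hi.
  assert (Hin : In i (rng n)).
  { destruct e; subst i; [rewrite <- (Nat.add_0_r (Bk l + 1))|]; apply in_rng_blk; lia. }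
  assert (HiB : (Bk l + 1 <= i <= Bk l + k)%nat) by (destruct e; subst i; lia).
  set (z := Cmul (sgnC e) (x i)).
  set (Z := Cexp z).
  set (Ye := Cexp (Cmul (sgnC e) (ys l))).
  assert (HYe0 : Ye <> C0) by apply Cexp_neq0.
  assert (HZ0 : Z <> C0) by apply Cexp_neq0.
  assert (HZY : Cmul Z tt = Cmul Ye qq).
  { unfold Z, Ye, z. destruct e; subst i.
    - rewrite !Cexp_sgn_true. apply WY; auto.
    - apply ZY_last; auto. }
  rewrite K_coef_eq. unfold B_coef. cbv zeta. rewrite Cexp_2. fold z Z Ye.
  rewrite (rng_split n k m Hn), Cprod_app, Cprod_flat_map.
  set (OWN := Cprod (seq (Bk l + 1) k) (fun j => if Nat.eqb j i then C1 else hK tt z (x j))).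
  set (Gt := fun l' => Cmul (gfun (Csub (Cmul (sgnC e) (ys l)) (ys l')) qq C1)
                            (gfun (Cadd (Cmul (sgnC e) (ys l)) (ys l')) qq C1)).
  assert (EB : Cprod (rng m) (fun l' => Cprod (seq (Bk l' + 1) k)
                    (fun j => if Nat.eqb j i then C1 else hK tt z (x j)))
             = Cmul OWN (Cprod (rng m) (fun l' => if Nat.eqb l' l then C1 else Gt l'))).
  { rewrite <- Cprod_pull; [| unfold rng; apply seq_NoDup | unfold rng; apply in_seq; lia].
    apply Cprod_ext. intros l' Hl'. unfold rng in Hl'; apply in_seq in Hl'.
    destruct (Nat.eqb_spec l' l) as [->|Hne]; [reflexivity|].
    rewrite (Cprod_ext _ _ (fun j => hK tt z (x j))).
    2:{ intros j Hj. apply in_seq in Hj. destruct (Nat.eqb_spec j i); [|reflexivity].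
        exfalso. subst j. apply Hne.
        assert (k * (l - 1) < k * l' /\ k * (l' - 1) < k * l)%nat by nia.
        destruct (Nat.lt_total l l') as [Hlt|[Heq|Hlt]]; auto; exfalso.
        - assert (k * l <= k * (l' - 1))%nat by (apply Nat.mul_le_mono_l; lia). nia.
        - assert (k * l' <= k * (l - 1))%nat by (apply Nat.mul_le_mono_l; lia). nia. }
    assert (Hout : forall r, (r < k)%nat -> (Bk l' + 1 + r)%nat <> i).
    { intros r Hr Heq. apply Hne.
      destruct (Nat.lt_total l l') as [Hlt|[Heq'|Hlt]]; auto; exfalso.
      - assert (k * l <= k * (l' - 1))%nat by (apply Nat.mul_le_mono_l; lia). nia.
      - assert (k * l' <= k * (l - 1))%nat by (apply Nat.mul_le_mono_l; lia). nia. }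
    unfold z. rewrite (Hb_out i e l' Hin ltac:(lia) Hout). fold z Z.
    unfold Gt. f_equal.
    + symmetry. apply (convB_minus (sh eta) (qh hbar) tt qq (sh_neq0 eta) (qh_neq0 hbar)
         (t1_sh k eta ltac:(lia)) (q_qh k hbar ltac:(lia))
         (Wb l') Z Ye (Yb l')); auto using Wb_neq0, Yb_neq0, Cexp_neq0.
      * apply WY; lia.
      * rewrite Cexp_sub. reflexivity.
      * apply TTk_q; auto; lia.
    + symmetry. apply (convB_plus (sh eta) (qh hbar) tt qq T (sh_neq0 eta) (qh_neq0 hbar)
         (t1_sh k eta ltac:(lia)) (q_qh k hbar ltac:(lia)) (TT_t1 eta)
         (Wb l') Z Ye (Yb l')); auto using Wb_neq0, Yb_neq0, Cexp_neq0.
      * apply WY; lia.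
      * rewrite Cexp_add. reflexivity.
      * apply TTk_q; auto; lia. }
  rewrite EB. fold Gt.
  assert (E1 : Cprod (rng N1) (fun j => if Nat.eqb j i then C1 else hK tt z (x j))
     = Cprod (rng N1) (fun j => Cmul (gfun (Csub (Cmul (sgnC e) (ys l)) (xs j)) (Cmul (qh hbar) (sh eta)) (Cmul (qh hbar) (Cinv (sh eta))))
                                (gfun (Cadd (Cmul (sgnC e) (ys l)) (xs j)) (Cmul (qh hbar) (sh eta)) (Cmul (qh hbar) (Cinv (sh eta)))))).
  { apply Cprod_ext. intros j Hj. unfold rng in Hj; apply in_seq in Hj.
    destruct (Nat.eqb_spec j i); [nia|].
    rewrite (xs_eq j) by lia.
    apply (convBN1 (sh eta) (qh hbar) tt qq T (sh_neq0 eta) (qh_neq0 hbar)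
         (t1_sh k eta ltac:(lia)) (q_qh k hbar ltac:(lia)) (TT_t1 eta) Z Ye (Cexp (x j)));
      auto using Cexp_neq0. }
  assert (HP : Cmul (Cmul OWN (Csub (Cmul tt tt) C1)) (Csub (Cmul Ye Ye) C1)
     = Cmul (Cmul (Cdiv tt qq) (Cdiv tt qq)) (Cmul (Csub (Cmul qq qq) C1) (Csub (Cmul Z Z) C1))).
  { unfold OWN, Ye, Z, z. clear EB E1 HZY HYe0 HZ0 OWN Gt Ye Z z.
    destruct e; rewrite Hi.
    - rewrite (Cexp_sgn_true (ys l)). apply own_first; auto.
    - apply own_last; auto. }
  assert (Ht1m : Csub (Cmul tt tt) C1 <> C0).
  { destruct HK as [HK1 _]. intro E. apply HK1.
    replace (Csub tt (Cinv tt)) with (Cmul (Cinv tt) (Csub (Cmul tt tt) C1)) by (pose proof (t1_neq0 eta); field; auto).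
    rewrite E; ring. }
  assert (HZZ : Csub C1 (Cmul Z Z) <> C0).
  { destruct HK as [_ HK2]. destruct (HK2 i e Hin) as [_ [_ HZ2]]. rewrite Cexp_2 in HZ2. exact HZ2. }
  assert (HMl : In l (rng m)) by (unfold rng; apply in_seq; lia).
  destruct HM as [_ [_ HM3]]. destruct (HM3 l e HMl) as [_ [_ [HM4 HM5]]].
  cbv zeta in HM4, HM5. rewrite Cexp_2 in HM4, HM5. fold Ye in HM4, HM5.
  pose proof (own_final tt qq Z Ye OWN t0 tn u0 un (t1_neq0 eta) (q_neq0 hbar) HYe0 Hu0 Hun HZY HP
      Ht1m HM5 HZZ HM4) as E2.
  unfold BdB in E2.
  rewrite E1.
  match goal with |- Cmul ?I (Cmul (Cmul ?P1 (Cmul OWN ?P2)) ?BK) = Cmul ?I' (Cmul ?R (Cmul ?A1 (Cmul ?A2 ?BB))) =>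
    transitivity (Cmul I (Cmul (Cmul P1 P2) (Cmul OWN BK))); [ring|];
    rewrite E2;
    transitivity (Cmul I' (Cmul (Cmul A1 A2) (Cmul R BB))); [reflexivity| ring] end.
Qed.

Lemma gden_meta : gden (Copp eta) tt = C0.
Proof.
  unfold gden. rewrite Cexp_opp. fold T. rewrite (TT_t1 eta).
  pose proof (t1_neq0 eta). field. auto.
Qed.

Lemma K_zero_plus : forall l r, (1 <= l <= m)%nat -> (1 <= r < k)%nat ->
  K_coef n hbar t0 tt tn u0 un (Bk l + 1 + r)%nat true x = C0.
Proof.
  intros l r Hl Hr. rewrite K_coef_eq.
  rewrite (Cprod_zero _ _ (Bk l + 1 + (r - 1))%nat); [ring| apply in_rng_blk; lia|].
  destruct (Nat.eqb_spec (Bk l + 1 + (r - 1)) (Bk l + 1 + r)); [lia|].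
  unfold hK, gfun.
  replace (Csub (Cmul (sgnC true) (x (Bk l + 1 + r)%nat)) (x (Bk l + 1 + (r - 1))%nat)) with (Copp eta).
  - rewrite gden_meta. unfold Cdiv. ring.
  - rewrite !(D0_blk n k m eta x Hk HD l) by lia. simpl sgnC.
    replace (Cnat r) with (Cadd (Cnat (r - 1)) C1) by (rewrite <- Cnat_S; f_equal; lia). ring.
Qed.

Lemma K_zero_minus : forall l r, (1 <= l <= m)%nat -> (r < k - 1)%nat ->
  K_coef n hbar t0 tt tn u0 un (Bk l + 1 + r)%nat false x = C0.
Proof.
  intros l r Hl Hr. rewrite K_coef_eq.
  rewrite (Cprod_zero _ _ (Bk l + 1 + (r + 1))%nat); [ring| apply in_rng_blk; lia|].
  destruct (Nat.eqb_spec (Bk l + 1 + (r + 1)) (Bk l + 1 + r)); [lia|].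
  unfold hK, gfun.
  replace (Cadd (Cmul (sgnC false) (x (Bk l + 1 + r)%nat)) (x (Bk l + 1 + (r + 1))%nat)) with (Copp eta).
  - rewrite gden_meta. unfold Cdiv. ring.
  - rewrite !(D0_blk n k m eta x Hk HD l) by lia. simpl sgnC.
    replace (Cnat (r + 1)) with (Cadd (Cnat r) C1) by (rewrite Nat.add_1_r, Cnat_S; reflexivity). ring.
Qed.

Lemma block_sum : forall (F : Vec * Vec -> C) l (e : bool), (1 <= l <= m)%nat ->
  Csum (seq (Bk l + 1) k) (fun j => Cmul (K_coef n hbar t0 tt tn u0 un j e x)
      (Csub (F (chartD0 N1 k m (fun p => Csub (x p) (Cmul hbar (projS0 N1 k m (unitvec j e) p)))))
            (F (chartD0 N1 k m x))))
  = Cmul (Cinv (Cmul t0 tn)) (Cmul ratio (Cmul (B_coef N1 m hbar eta aa bb cc dd l e xs ys)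
       (Csub (F (xs, shift_at ys l (Cmul (sgnC e) eta))) (F (chartD0 N1 k m x))))).
Proof.
  intros F l e Hl.
  rewrite <- (Nat.add_0_r (Bk l + 1)), Csum_seq_shift.
  set (r0 := if e then 0%nat else (k - 1)%nat).
  set (V := Cmul (Cinv (Cmul t0 tn)) (Cmul ratio (Cmul (B_coef N1 m hbar eta aa bb cc dd l e xs ys)
       (Csub (F (xs, shift_at ys l (Cmul (sgnC e) eta))) (F (chartD0 N1 k m x)))))).
  rewrite (Csum_ext _ _ (fun r => if Nat.eqb (0 + r) r0 then V else C0)).
  - rewrite sum_ind.
    replace ((0 + 0 <=? r0) && (r0 <? 0 + 0 + k))%nat with true; [reflexivity|].
    symmetry; apply andb_true_intro; split; [apply Nat.leb_le| apply Nat.ltb_lt]; unfold r0; destruct e; lia.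
  - intros r Hr. apply in_seq in Hr.
    rewrite (chart_shift_y N1 k m eta hbar x l r e Hl ltac:(lia) ltac:(lia) Hh).
    simpl (0 + r)%nat.
    destruct (Nat.eqb_spec r r0) as [->|Hne].
    + unfold V. rewrite (B_case l e (Bk l + 1 + r0)%nat Hl) by (unfold r0; destruct e; lia).
      change (fst (chartD0 N1 k m x), shift_at (snd (chartD0 N1 k m x)) l (Cmul (sgnC e) eta))
        with (xs, shift_at ys l (Cmul (sgnC e) eta)).
      ring.
    + destruct e.
      * rewrite K_zero_plus by (unfold r0 in Hne; lia). ring.
      * rewrite K_zero_minus by (unfold r0 in Hne; lia). ring.
Qed.

Lemma main_id : forall F : Vec * Vec -> C,
  restr_act N1 k m hbar (Koornwinder_op n hbar t0 tt tn u0 un) F x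
  = Cadd (Cmul (Cinv (Cmul t0 tn)) (genK_act N1 m hbar eta aa bb cc dd F (chartD0 N1 k m x)))
         (Cmul (kappa_t n t0 tt tn) (F (chartD0 N1 k m x))).
Proof.
  intros F.
  unfold restr_act, Koornwinder_op.
  rewrite Csum_app, Csum_flat_map.
  rewrite (Csum_ext (rng n) _ (fun i => Csum signs (fun e =>
      Cmul (K_coef n hbar t0 tt tn u0 un i e x)
           (F (chartD0 N1 k m (fun j => Csub (x j) (Cmul hbar (projS0 N1 k m (unitvec i e) j)))))))).
  2:{ intros i _. rewrite Csum_map. reflexivity. }
  rewrite Csum_cons. cbv beta iota delta [fst snd]. rewrite chart_zero.
  set (F0 := F (chartD0 N1 k m x)).
  rewrite (Csum2_split (rng n) signs (fun i e => K_coef n hbar t0 tt tn u0 un i e x)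
     (fun i e => F (chartD0 N1 k m (fun j => Csub (x j) (Cmul hbar (projS0 N1 k m (unitvec i e) j))))) F0).
  simpl (Csum [] _).
  set (S := Csum (rng n) _).
  match goal with |- Cadd (Cadd S (Cmul ?SK F0)) (Cadd (Cmul (Csub ?kap ?SK') F0) C0) = _ =>
    transitivity (Cadd S (Cmul kap F0)); [ring|] end.
  f_equal.
  unfold S, genK_act. cbv zeta.
  rewrite (rng_split n k m Hn), Csum_app, Csum_flat_map.
  match goal with |- Cadd ?S1 ?S2 = Cmul ?I (Cadd ?G1 (Cmul ?R ?G2)) =>
    assert (E1 : S1 = Cmul I G1); [|assert (E2 : S2 = Cmul I (Cmul R G2)); [|rewrite E1, E2; ring]] end.
  - rewrite <- Csum_scal. apply Csum_ext. intros i Hi. unfold rng in Hi; apply in_seq in Hi.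
    rewrite <- Csum_scal. apply Csum_ext. intros e _.
    rewrite (A_case i e) by lia. rewrite chart_shift_x by lia. unfold F0. replace (F (fst (chartD0 N1 k m x), snd (chartD0 N1 k m x))) with (F (chartD0 N1 k m x)) by reflexivity. ring.
  - rewrite <- !Csum_scal. apply Csum_ext. intros l Hl. unfold rng in Hl; apply in_seq in Hl.
    rewrite Csum_signs_swap, Csum_signs.
    unfold F0. rewrite !block_sum by lia.
    replace (F (fst (chartD0 N1 k m x), snd (chartD0 N1 k m x))) with (F (chartD0 N1 k m x)) by reflexivity.
    change (Cexp (Cdiv hbar (Cnat 2))) with qq. change (Cexp (Cdiv eta (Cnat 2))) with tt. ring.
Qed.
End Main.

Lemma exp_eq1 : forall w, Cexp w = C1 -> Cre w = 0 /\ exists z : Z, Cim w = IZR z * PI.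
Proof.
  intros [a b] H. unfold Cexp, C1, CR in H. injection H. intros H2 H1. simpl.
  assert (He : exp a > 0) by apply exp_pos.
  assert (Hs : sin b = 0) by (apply Rmult_eq_reg_l with (exp a); lra).
  pose proof (sin2_cos2 b) as Hsc. unfold Rsqr in Hsc.
  assert (Hc : cos b * cos b = 1) by nra.
  assert (Hea : exp a * exp a = 1).
  { replace 1 with ((exp a * cos b) * (exp a * cos b)) by (rewrite H1; ring). nra. }
  assert (Hea1 : exp a = 1) by nra.
  split.
  - rewrite <- exp_0 in Hea1. apply exp_inv in Hea1. exact Hea1.
  - apply sin_eq_0_0. exact Hs.
Qed.

Lemma exp_ne1_re : forall w, Cre w <> 0 -> Cexp w <> C1.
Proof. intros w Hw H. apply exp_eq1 in H. tauto. Qed.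

Lemma CZ_nat : forall a : nat, CZ (Z.of_nat a) = Cnat a.
Proof. intros. unfold CZ, Cnat. rewrite <- INR_IZR_INZ. reflexivity. Qed.

Lemma exp_ne1_lat : forall (k : nat) eta hbar (c : Z), hbar = Cmul (Cnat k) eta -> not_in_piIQ hbar ->
  c <> 0%Z -> Cexp (Cmul (CZ c) eta) <> C1.
Proof.
  intros k eta hbar c Hh Hp Hc H. apply exp_eq1 in H as [Hre [z Him]].
  apply (Hp (Z.of_nat k * z)%Z c Hc).
  assert (Hw : Cmul (CZ c) eta = mkC 0 (IZR z * PI)).
  { apply C_ext; simpl; [exact Hre| exact Him]. }
  rewrite Hh. replace (Cmul (CZ c) (Cmul (Cnat k) eta)) with (Cmul (Cnat k) (Cmul (CZ c) eta)) by ring.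
  rewrite Hw. rewrite <- CZ_nat. apply C_ext; unfold CZ, Cmul, CR; cbn [Cre Cim]; rewrite mult_IZR; ring.
Qed.

Lemma gden1_ne : forall w, Cexp w <> C1 -> gden w C1 <> C0.
Proof. intros w H E. apply H. unfold gden in E. rewrite Cinv_C1 in E.
  replace (Cexp w) with (Cadd (Csub (Cmul C1 (Cexp w)) C1) C1) by ring. rewrite E. ring. Qed.

Lemma gden_exp_ne : forall w b, Cexp (Cadd w (Cmul (Cnat 2) b)) <> C1 -> gden w (Cexp b) <> C0.
Proof.
  intros w b H E. apply H. rewrite Cexp_add, Cexp_2. unfold gden in E.
  pose proof (Cexp_neq0 b).
  replace (Cexp w) with (Cmul (Cinv (Cexp b)) (Cadd (Csub (Cmul (Cexp b) (Cexp w)) (Cinv (Cexp b))) (Cinv (Cexp b))))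
    by (field; auto).
  rewrite E. field. auto.
Qed.

Lemma sub1_ne : forall v, Cexp v <> C1 -> Csub C1 (Cexp v) <> C0.
Proof. intros v H E. apply H. replace (Cexp v) with (Csub C1 (Csub C1 (Cexp v))) by ring. rewrite E. ring. Qed.

Lemma sub1_div_ne : forall v a, Cexp (Csub v a) <> C1 -> Csub C1 (Cmul (Cinv (Cexp a)) (Cexp v)) <> C0.
Proof.
  intros v a H E. apply H. rewrite Cexp_sub. unfold Cdiv.
  replace (Cmul (Cexp v) (Cinv (Cexp a))) with (Csub C1 (Csub C1 (Cmul (Cinv (Cexp a)) (Cexp v)))) by ring.
  rewrite E. ring.
Qed.

Definition sg (e : bool) : R := if e then 1 else -1.
Lemma Cre_add : forall a b, Cre (Cadd a b) = Cre a + Cre b. Proof. reflexivity. Qed.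
Lemma Cre_sub : forall a b, Cre (Csub a b) = Cre a - Cre b. Proof. intros; simpl; ring. Qed.
Lemma Cre_opp : forall a, Cre (Copp a) = - Cre a. Proof. reflexivity. Qed.
Lemma Cre_sgn : forall e a, Cre (Cmul (sgnC e) a) = sg e * Cre a.
Proof. intros [] a; simpl; ring. Qed.
Lemma Cre_2 : forall a, Cre (Cmul (Cnat 2) a) = 2 * Cre a.
Proof. intros. unfold Cnat, CR; simpl. ring. Qed.
Lemma Cre_div4 : forall a, Cre (Cdiv a (Cnat 4)) = Cre a / 4.
Proof. intros. unfold Cdiv, Cnat, CR, Cinv, Cmul; simpl. field. Qed.
Lemma Cre_CR : forall r, Cre (CR r) = r. Proof. reflexivity. Qed.
Lemma sg_abs : forall e, Rabs (sg e) = 1.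
Proof. intros []; simpl; [apply Rabs_R1| rewrite Rabs_left by lra; lra]. Qed.

Lemma big_ne0 : forall R M u s, 0 <= M -> M < R -> 1 <= Rabs u -> Rabs s <= M -> R * u + s <> 0.
Proof.
  intros R M u s HM HR Hu Hs E.
  assert (Rabs (R * u) = Rabs s) by (replace (R * u) with (- s) by lra; apply Rabs_Ropp).
  rewrite Rabs_mult, Rabs_right in H by lra. nra.
Qed.

Lemma u_diff : forall a b : nat, a <> b -> 1 <= Rabs (INR a - INR b).
Proof.
  intros a b H. destruct (Nat.lt_total a b) as [Hl|[He|Hl]]; [|contradiction|].
  - apply lt_INR in Hl. assert (INR (S a) <= INR b) by (apply le_INR; apply INR_lt in Hl; lia).
    rewrite S_INR in H0. rewrite Rabs_left by lra. lra.
  - assert (INR (S b) <= INR a) by (apply le_INR; lia). rewrite S_INR in H0.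
    rewrite Rabs_right by lra. lra.
Qed.
Lemma u_sum : forall a b : nat, (1 <= a)%nat -> 1 <= Rabs (INR a + INR b).
Proof.
  intros a b Ha. apply le_INR in Ha. simpl in Ha. pose proof (pos_INR b).
  rewrite Rabs_right by lra. lra.
Qed.
Lemma u_sgm : forall e (a b : nat), (e = false /\ (1 <= a)%nat) \/ a <> b -> 1 <= Rabs (sg e * INR a - INR b).
Proof.
  intros [] a b H; simpl.
  - replace (1 * INR a - INR b) with (INR a - INR b) by ring. apply u_diff. destruct H as [[H _]|H]; [discriminate|auto].
  - replace (-1 * INR a - INR b) with (- (INR a + INR b)) by ring. rewrite Rabs_Ropp.
    destruct (Nat.eq_dec a 0) as [->|Ha]; [destruct H as [[_ H]|H]; [lia|]|apply u_sum; lia].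
    simpl. replace (0 + INR b) with (INR b - INR 0) by (simpl; ring). rewrite Rabs_minus_sym.
    apply u_diff. auto.
Qed.
Lemma u_sgp : forall e (a b : nat), (e = true /\ (1 <= a)%nat) \/ a <> b -> 1 <= Rabs (sg e * INR a + INR b).
Proof.
  intros [] a b H; simpl.
  - replace (1 * INR a + INR b) with (INR a + INR b) by ring.
    destruct (Nat.eq_dec a 0) as [->|Ha]; [destruct H as [[_ H]|H]; [lia|]|apply u_sum; lia].
    simpl. replace (0 + INR b) with (INR b - INR 0) by (simpl; ring). apply u_diff. auto.
  - replace (-1 * INR a + INR b) with (INR b - INR a) by ring. apply u_diff.
    destruct H as [[H _]|H]; [discriminate|auto].
Qed.
Lemma u_2 : forall e (a : nat), (1 <= a)%nat -> 1 <= Rabs (2 * (sg e * INR a)).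
Proof.
  intros e a Ha. apply le_INR in Ha. simpl in Ha. rewrite Rabs_mult, Rabs_mult, sg_abs.
  rewrite (Rabs_right 2) by lra. rewrite Rabs_right by lra. lra.
Qed.

Lemma Cre_lin : forall a b e, Cre (Cmul (Csub (Cdiv (Cnat a) (Cnat 2)) (Cnat b)) e) = (INR a / 2 - INR b) * Cre e.
Proof. intros. unfold Cdiv, Cnat, CR, Cinv, Cmul, Csub, Cadd, Copp; simpl. field. Qed.

Section Exist.
Variables (n k m : nat) (eta hbar : C).
Hypothesis Hk : (2 <= k)%nat.
Hypothesis Hm : (1 <= m)%nat.
Hypothesis Hn : (m * k <= n)%nat.
Hypothesis Hh : hbar = Cmul (Cnat k) eta.
Hypothesis Hp : not_in_piIQ hbar.
Local Notation N1 := (n - m * k)%nat.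

Definition DD := INR k * Rabs (Cre eta).
Definition MM := 2 * DD + Rabs (Cre hbar) + Rabs (Cre eta).
Definition R0 := MM + 1.
Definition gr (j : nat) : nat := if (j <=? N1)%nat then j else (N1 + 1 + (j - N1 - 1) / k)%nat.
Definition rr (j : nat) : nat := ((j - N1 - 1) mod k)%nat.
Definition wx (j : nat) : C :=
  if (j <=? N1)%nat then CR (R0 * INR j)
  else Cadd (CR (R0 * INR (gr j))) (Cmul (Csub (Cdiv (Cnat (k - 1)) (Cnat 2)) (Cnat (rr j))) eta).

Lemma DD_ge0 : 0 <= DD. Proof. unfold DD. apply Rmult_le_pos; [apply pos_INR| apply Rabs_pos]. Qed.
Lemma MM_ge0 : 0 <= MM. Proof. unfold MM. pose proof DD_ge0. pose proof (Rabs_pos (Cre hbar)). pose proof (Rabs_pos (Cre eta)). lra. Qed.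

Lemma wx_re : forall j, Rabs (Cre (wx j) - R0 * INR (gr j)) <= DD.
Proof.
  intros j. unfold wx, gr. destruct (j <=? N1)%nat.
  - rewrite Cre_CR. replace (R0 * INR j - R0 * INR j) with 0 by ring. rewrite Rabs_R0. apply DD_ge0.
  - rewrite Cre_add, Cre_CR, Cre_lin.
    replace (R0 * INR (N1 + 1 + (j - N1 - 1) / k) + (INR (k - 1) / 2 - INR (rr j)) * Cre eta -
      R0 * INR (N1 + 1 + (j - N1 - 1) / k)) with ((INR (k - 1) / 2 - INR (rr j)) * Cre eta) by ring.
    rewrite Rabs_mult. unfold DD. apply Rmult_le_compat_r; [apply Rabs_pos|].
    assert (Hr : (rr j < k)%nat) by (unfold rr; apply Nat.mod_upper_bound; lia).
    apply lt_INR in Hr. pose proof (pos_INR (rr j)).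
    rewrite minus_INR by lia. simpl INR.
    assert (HK2 : 2 <= INR k) by (replace 2 with (INR 2) by (simpl; ring); apply le_INR; lia).
    apply Rabs_le. split; lra.
Qed.

Lemma gr_ge1 : forall j, (1 <= j)%nat -> (1 <= gr j)%nat.
Proof. intros j Hj. unfold gr. destruct (j <=? N1)%nat; lia. Qed.

Lemma divmod_succ : forall p, ((p + 1) mod k <> 0)%nat -> ((p + 1) / k = p / k /\ (p + 1) mod k = p mod k + 1)%nat.
Proof.
  intros p H.
  pose proof (Nat.div_mod_eq p k) as E. pose proof (Nat.mod_upper_bound p k ltac:(lia)) as U.
  destruct (Nat.eq_dec (p mod k + 1) k) as [Ek|Ek].
  - exfalso. apply H. replace (p + 1)%nat with ((p / k + 1) * k)%nat by nia.
    apply Nat.Div0.mod_mul.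
  - split.
    + symmetry. apply Nat.div_unique with (p mod k + 1)%nat; lia.
    + symmetry. apply Nat.mod_unique with (p / k)%nat; lia.
Qed.

Lemma wx_D0 : inD0 N1 k m eta wx.
Proof.
  intros j [H1 [H2 H3]]. unfold wx, gr, rr.
  replace (j <=? N1)%nat with false by (symmetry; apply Nat.leb_gt; lia).
  replace (S j <=? N1)%nat with false by (symmetry; apply Nat.leb_gt; lia).
  replace (S j - N1 - 1)%nat with ((j - N1 - 1) + 1)%nat by lia.
  replace (j - N1)%nat with ((j - N1 - 1) + 1)%nat in H3 by lia.
  destruct (divmod_succ _ H3) as [E1 E2]. rewrite E1, E2.
  rewrite (Nat.add_1_r ((j - N1 - 1) mod k)), (Cnat_S ((j - N1 - 1) mod k)). ring.
Qed.

Lemma wx_first : forall l, (1 <= l <= m)%nat ->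
  wx (N1 + k * (l - 1) + 1)%nat = Cadd (CR (R0 * INR (N1 + l))) (Cmul (Cdiv (Cnat (k - 1)) (Cnat 2)) eta).
Proof.
  intros l Hl. unfold wx, gr, rr.
  replace (N1 + k * (l - 1) + 1 <=? N1)%nat with false by (symmetry; apply Nat.leb_gt; nia).
  destruct (div_blk k N1 (l - 1) 0 ltac:(lia) ltac:(lia)) as [E1 E2].
  rewrite Nat.add_0_r in E1, E2. rewrite E1, E2.
  replace (N1 + 1 + (l - 1))%nat with (N1 + l)%nat by lia. rewrite Cnat_0. ring.
Qed.

Lemma wys : forall l, (1 <= l <= m)%nat -> snd (chartD0 N1 k m wx) l = CR (R0 * INR (N1 + l)).
Proof.
  intros l Hl. rewrite (chart_y n k m eta wx Hk wx_D0 l Hl), wx_first by auto. ring.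
Qed.

Lemma wxs : forall j, (1 <= j <= N1)%nat -> fst (chartD0 N1 k m wx) j = CR (R0 * INR j).
Proof.
  intros j Hj. unfold chartD0; cbv beta iota delta [fst].
  replace ((1 <=? j)%nat && (j <=? N1)%nat)%bool with true
    by (symmetry; apply andb_true_intro; split; apply Nat.leb_le; lia).
  unfold wx. replace (j <=? N1)%nat with true by (symmetry; apply Nat.leb_le; lia). reflexivity.
Qed.

Lemma CZ_sub_nat : forall a b : nat, CZ (Z.of_nat a - Z.of_nat b) = Csub (Cnat a) (Cnat b).
Proof.
  intros. apply C_ext; unfold CZ, Cnat, CR, Csub, Cadd, Copp; cbn [Cre Cim];
  rewrite ?minus_IZR, <- ?INR_IZR_INZ; ring.
Qed.

Lemma wx_same : forall i j, (1 <= i <= n)%nat -> (1 <= j <= n)%nat -> i <> j -> gr i = gr j ->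
  Csub (wx i) (wx j) = Cmul (CZ (Z.of_nat (rr j) - Z.of_nat (rr i))) eta /\ rr i <> rr j.
Proof.
  intros i j Hi Hj Hne Hg. unfold gr in Hg.
  destruct (i <=? N1)%nat eqn:Ei; destruct (j <=? N1)%nat eqn:Ej;
  apply Nat.leb_le in Ei || apply Nat.leb_gt in Ei; apply Nat.leb_le in Ej || apply Nat.leb_gt in Ej;
  try lia.
  assert (Hq : ((i - N1 - 1) / k = (j - N1 - 1) / k)%nat) by lia.
  assert (Hr : rr i <> rr j).
  { unfold rr. intro E. apply Hne.
    pose proof (Nat.div_mod_eq (i - N1 - 1) k). pose proof (Nat.div_mod_eq (j - N1 - 1) k).
    rewrite Hq, E in H. lia. }
  split; auto.
  unfold wx, gr. replace (i <=? N1)%nat with false by (symmetry; apply Nat.leb_gt; lia).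
  replace (j <=? N1)%nat with false by (symmetry; apply Nat.leb_gt; lia).
  rewrite Hq, CZ_sub_nat. ring.
Qed.

Definition dl (j : nat) : R := Cre (wx j) - R0 * INR (gr j).
Lemma dl_bnd : forall j, Rabs (dl j) <= DD. Proof. intros. apply wx_re. Qed.
Lemma Cre_wx : forall j, Cre (wx j) = R0 * INR (gr j) + dl j. Proof. intros. unfold dl. ring. Qed.

Lemma re_form_ne : forall w u s, Cre w = R0 * u + s -> 1 <= Rabs u -> Rabs s <= MM -> Cexp w <> C1.
Proof.
  intros w u s Hw Hu Hs. apply exp_ne1_re. rewrite Hw. apply (big_ne0 R0 MM); auto.
  apply MM_ge0. unfold R0; lra.
Qed.

Lemma bnd_sg : forall e a b, Rabs a <= DD -> Rabs b <= DD ->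
  Rabs (sg e * a - b) <= MM /\ Rabs (sg e * a + b) <= MM.
Proof.
  intros e a b Ha Hb. unfold MM. pose proof (Rabs_pos (Cre hbar)). pose proof (Rabs_pos (Cre eta)).
  assert (Rabs (sg e * a) <= DD) by (rewrite Rabs_mult, sg_abs; lra).
  split; [unfold Rminus; eapply Rle_trans; [apply Rabs_triang|rewrite Rabs_Ropp; lra]
         | eapply Rle_trans; [apply Rabs_triang| lra]].
Qed.
Lemma bnd_2 : forall e a c, Rabs a <= DD -> (c = 0 \/ c = Cre hbar \/ c = Cre eta) -> Rabs (2 * (sg e * a) - c) <= MM.
Proof.
  intros e a c Ha Hc. unfold MM. pose proof (Rabs_pos (Cre hbar)). pose proof (Rabs_pos (Cre eta)).
  assert (Rabs (2 * (sg e * a)) <= 2 * DD) by (rewrite !Rabs_mult, sg_abs, Rabs_right by lra; lra).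
  unfold Rminus; eapply Rle_trans; [apply Rabs_triang|rewrite Rabs_Ropp].
  destruct Hc as [Hc|[Hc|Hc]]; rewrite Hc; [rewrite Rabs_R0|..]; lra.
Qed.

Lemma eta_ne1 : Cexp eta <> C1.
Proof.
  replace eta with (Cmul (CZ 1) eta) at 1 by (apply C_ext; unfold CZ, CR, Cmul; simpl; ring).
  apply (exp_ne1_lat k eta hbar 1 Hh Hp). discriminate.
Qed.

Lemma qq_exp : Cmul (Cexp (Cdiv hbar (Cnat 2))) (Cexp (Cdiv hbar (Cnat 2))) = Cexp hbar.
Proof. rewrite <- Cexp_add. f_equal. rewrite Cnat_2. field. apply C2_neq0. Qed.
Lemma ss_exp : Cmul (Cexp (Cdiv eta (Cnat 2))) (Cexp (Cdiv eta (Cnat 2))) = Cexp eta.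
Proof. rewrite <- Cexp_add. f_equal. rewrite Cnat_2. field. apply C2_neq0. Qed.

Lemma in_rng_iff : forall j N, In j (rng N) <-> (1 <= j <= N)%nat.
Proof. intros. unfold rng. rewrite in_seq. lia. Qed.

Lemma wx_Kgood : K_good n hbar (Cexp (Cdiv eta (Cnat 2))) wx.
Proof.
  unfold K_good. cbv zeta. split.
  { intro E. apply eta_ne1. rewrite <- ss_exp.
    pose proof (Cexp_neq0 (Cdiv eta (Cnat 2))) as H0.
    replace (Cmul (Cexp (Cdiv eta (Cnat 2))) (Cexp (Cdiv eta (Cnat 2))))
      with (Cadd (Cmul (Cexp (Cdiv eta (Cnat 2))) (Csub (Cexp (Cdiv eta (Cnat 2))) (Cinv (Cexp (Cdiv eta (Cnat 2)))))) C1)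
      by (field; auto).
    rewrite E. ring. }
  intros i e Hi. apply in_rng_iff in Hi.
  pose proof (gr_ge1 i ltac:(lia)) as Hgi.
  split; [|split].
  - intros j Hj Hji. apply in_rng_iff in Hj.
    destruct (bnd_sg e (dl i) (dl j) (dl_bnd i) (dl_bnd j)) as [B1 B2].
    split; apply gden1_ne.
    + destruct (Nat.eq_dec (gr i) (gr j)) as [Eg|Eg]; destruct e.
      * destruct (wx_same i j ltac:(lia) ltac:(lia) ltac:(lia) Eg) as [E Rr].
        replace (Csub (Cmul (sgnC true) (wx i)) (wx j)) with (Csub (wx i) (wx j)) by (simpl; ring).
        rewrite E. apply (exp_ne1_lat k eta hbar _ Hh Hp). lia.
      * apply (re_form_ne _ (sg false * INR (gr i) - INR (gr j)) (sg false * dl i - dl j)); auto.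
        -- rewrite Cre_sub, Cre_sgn, !Cre_wx. ring.
        -- apply u_sgm. left; auto.
      * apply (re_form_ne _ (sg true * INR (gr i) - INR (gr j)) (sg true * dl i - dl j)); auto.
        -- rewrite Cre_sub, Cre_sgn, !Cre_wx. ring.
        -- apply u_sgm. right; auto.
      * apply (re_form_ne _ (sg false * INR (gr i) - INR (gr j)) (sg false * dl i - dl j)); auto.
        -- rewrite Cre_sub, Cre_sgn, !Cre_wx. ring.
        -- apply u_sgm. left; auto.
    + destruct (Nat.eq_dec (gr i) (gr j)) as [Eg|Eg]; destruct e.
      * apply (re_form_ne _ (sg true * INR (gr i) + INR (gr j)) (sg true * dl i + dl j)); auto.
        -- rewrite Cre_add, Cre_sgn, !Cre_wx. ring.
        -- apply u_sgp. left; auto.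
      * destruct (wx_same j i ltac:(lia) ltac:(lia) ltac:(lia) (eq_sym Eg)) as [E Rr].
        replace (Cadd (Cmul (sgnC false) (wx i)) (wx j)) with (Csub (wx j) (wx i)) by (simpl; ring).
        rewrite E. apply (exp_ne1_lat k eta hbar _ Hh Hp). lia.
      * apply (re_form_ne _ (sg true * INR (gr i) + INR (gr j)) (sg true * dl i + dl j)); auto.
        -- rewrite Cre_add, Cre_sgn, !Cre_wx. ring.
        -- apply u_sgp. left; auto.
      * apply (re_form_ne _ (sg false * INR (gr i) + INR (gr j)) (sg false * dl i + dl j)); auto.
        -- rewrite Cre_add, Cre_sgn, !Cre_wx. ring.
        -- apply u_sgp. right; auto.
  - rewrite qq_exp. apply sub1_div_ne.
    apply (re_form_ne _ (2 * (sg e * INR (gr i))) (2 * (sg e * dl i) - Cre hbar)).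
    + rewrite Cre_sub, Cre_2, Cre_sgn, Cre_wx. ring.
    + apply u_2; auto.
    + apply bnd_2; auto. apply dl_bnd.
  - apply sub1_ne.
    apply (re_form_ne _ (2 * (sg e * INR (gr i))) (2 * (sg e * dl i) - 0)).
    + rewrite Cre_2, Cre_sgn, Cre_wx. ring.
    + apply u_2; auto.
    + apply bnd_2; auto. apply dl_bnd.
Qed.

Lemma b_inv1 : forall a b, Cmul (Cinv (Cexp a)) (Cexp b) = Cexp (Csub b a).
Proof. intros. rewrite Cexp_sub. unfold Cdiv. ring. Qed.
Lemma b_inv2 : forall a b, Cmul (Cexp a) (Cinv (Cexp b)) = Cexp (Csub a b).
Proof. intros. rewrite Cexp_sub. reflexivity. Qed.

Lemma bnd_beta : forall c1 c2 : R, c1 = Cre eta \/ c1 = Cre hbar -> c2 = Cre eta \/ c2 = Cre hbar ->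
  Rabs (2 * (c1 / 4 - c2 / 4)) <= MM.
Proof.
  intros c1 c2 H1 H2. unfold MM. pose proof DD_ge0.
  pose proof (Rabs_pos (Cre hbar)). pose proof (Rabs_pos (Cre eta)).
  replace (2 * (c1 / 4 - c2 / 4)) with (c1 / 2 + (- c2) / 2) by field.
  eapply Rle_trans; [apply Rabs_triang|].
  unfold Rdiv. rewrite !Rabs_mult, Rabs_Ropp. rewrite (Rabs_right (/2)) by lra.
  destruct H1 as [H1|H1]; destruct H2 as [H2|H2]; rewrite H1, H2; lra.
Qed.

Lemma wx_Mgood : M_good N1 m hbar eta (chartD0 N1 k m wx).
Proof.
  unfold M_good. cbv zeta. split; [|split].
  - rewrite ss_exp. intro E. apply eta_ne1. pose proof (Cexp_neq0 eta).
    assert (E' : Cinv (Cexp eta) = C1).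
    { replace (Cinv (Cexp eta)) with (Csub C1 (Csub C1 (Cinv (Cexp eta)))) by ring. rewrite E. ring. }
    replace (Cexp eta) with (Cinv (Cinv (Cexp eta))) by (field; repeat split; auto; let Hc := fresh in intro Hc; injection Hc; intros; lra).
    rewrite E'. apply Cinv_C1.
  - intros i e Hi. pose proof Hi as Hi'. apply in_rng_iff in Hi. rewrite (wxs i Hi).
    assert (Hi1 : (1 <= i)%nat) by lia.
    split; [|split; [|split]].
    + intros j Hj Hji. apply in_rng_iff in Hj. rewrite (wxs j Hj).
      split; apply gden1_ne.
      * apply (re_form_ne _ (sg e * INR i - INR j) 0).
        -- rewrite Cre_sub, Cre_sgn, !Cre_CR. ring.
        -- apply u_sgm; auto.
        -- rewrite Rabs_R0; apply MM_ge0.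
      * apply (re_form_ne _ (sg e * INR i + INR j) 0).
        -- rewrite Cre_add, Cre_sgn, !Cre_CR. ring.
        -- apply u_sgp; auto.
        -- rewrite Rabs_R0; apply MM_ge0.
    + intros l Hl. apply in_rng_iff in Hl. rewrite (wys l Hl). rewrite b_inv1.
      split; apply gden_exp_ne.
      * apply (re_form_ne _ (sg e * INR i - INR (N1 + l)) (2 * (Cre eta / 4 - Cre hbar / 4))).
        -- rewrite Cre_add, Cre_2, Cre_sub, Cre_sub, Cre_sgn, !Cre_CR, !Cre_div4. ring.
        -- apply u_sgm; right; lia.
        -- apply bnd_beta; auto.
      * apply (re_form_ne _ (sg e * INR i + INR (N1 + l)) (2 * (Cre eta / 4 - Cre hbar / 4))).
        -- rewrite Cre_add, Cre_2, Cre_sub, Cre_add, Cre_sgn, !Cre_CR, !Cre_div4. ring.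
        -- apply u_sgp; right; lia.
        -- apply bnd_beta; auto.
    + rewrite qq_exp. apply sub1_div_ne.
      apply (re_form_ne _ (2 * (sg e * INR i)) (2 * (sg e * 0) - Cre hbar)).
      * rewrite Cre_sub, Cre_2, Cre_sgn, Cre_CR. ring.
      * apply u_2; auto.
      * apply bnd_2; auto. rewrite Rabs_R0. apply DD_ge0.
    + apply sub1_ne.
      apply (re_form_ne _ (2 * (sg e * INR i)) (2 * (sg e * 0) - 0)).
      * rewrite Cre_2, Cre_sgn, Cre_CR. ring.
      * apply u_2; auto.
      * apply bnd_2; auto. rewrite Rabs_R0. apply DD_ge0.
  - intros l e Hl. apply in_rng_iff in Hl. rewrite (wys l Hl).
    assert (Hl1 : (1 <= N1 + l)%nat) by lia.
    split; [|split; [|split]].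
    + intros j Hj. apply in_rng_iff in Hj. rewrite (wxs j Hj). rewrite b_inv2.
      split; apply gden_exp_ne.
      * apply (re_form_ne _ (sg e * INR (N1 + l) - INR j) (2 * (Cre hbar / 4 - Cre eta / 4))).
        -- rewrite Cre_add, Cre_2, Cre_sub, Cre_sub, Cre_sgn, !Cre_CR, !Cre_div4. ring.
        -- apply u_sgm; right; lia.
        -- apply bnd_beta; auto.
      * apply (re_form_ne _ (sg e * INR (N1 + l) + INR j) (2 * (Cre hbar / 4 - Cre eta / 4))).
        -- rewrite Cre_add, Cre_2, Cre_sub, Cre_add, Cre_sgn, !Cre_CR, !Cre_div4. ring.
        -- apply u_sgp; right; lia.
        -- apply bnd_beta; auto.
    + intros l' Hl' Hll. apply in_rng_iff in Hl'. rewrite (wys l' Hl').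
      split; apply gden1_ne.
      * apply (re_form_ne _ (sg e * INR (N1 + l) - INR (N1 + l')) 0).
        -- rewrite Cre_sub, Cre_sgn, !Cre_CR. ring.
        -- apply u_sgm; right; lia.
        -- rewrite Rabs_R0; apply MM_ge0.
      * apply (re_form_ne _ (sg e * INR (N1 + l) + INR (N1 + l')) 0).
        -- rewrite Cre_add, Cre_sgn, !Cre_CR. ring.
        -- apply u_sgp; right; lia.
        -- rewrite Rabs_R0; apply MM_ge0.
    + rewrite ss_exp. apply sub1_div_ne.
      apply (re_form_ne _ (2 * (sg e * INR (N1 + l))) (2 * (sg e * 0) - Cre eta)).
      * rewrite Cre_sub, Cre_2, Cre_sgn, Cre_CR. ring.
      * apply u_2; auto.
      * apply bnd_2; auto. rewrite Rabs_R0. apply DD_ge0.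
    + apply sub1_ne.
      apply (re_form_ne _ (2 * (sg e * INR (N1 + l))) (2 * (sg e * 0) - 0)).
      * rewrite Cre_2, Cre_sgn, Cre_CR. ring.
      * apply u_2; auto.
      * apply bnd_2; auto. rewrite Rabs_R0. apply DD_ge0.
Qed.
End Exist.

Theorem mainTheorem18 (n k m : nat) (eta1 hbar t0 tn u0 un : C) :
  (2 <= k)%nat -> (1 <= m)%nat -> (m * k <= n)%nat ->
  hbar = Cmul (Cnat k) eta1 -> not_in_piIQ hbar ->
  t0 <> C0 -> tn <> C0 -> u0 <> C0 -> un <> C0 ->
  let N1 := (n - m * k)%nat in
  let t1 := Cexp (Cdiv eta1 (Cnat 2)) in
  let q := Cexp (Cdiv hbar (Cnat 2)) in
  let a := Cmul (Cmul t0 u0) (Cinv q) in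
  let b := Copp (Cmul (Cmul t0 (Cinv u0)) (Cinv q)) in
  let c := Cmul tn un in
  let d := Copp (Cmul tn (Cinv un)) in
  (* well-definedness: the restriction to D_0 has meromorphic coefficients *)
  (exists x : Vec, inD0 N1 k m eta1 x /\ K_good n hbar t1 x /\
                   M_good N1 m hbar eta1 (chartD0 N1 k m x)) /\
  (* identity of operators on D_0 *)
  (forall (F : Vec * Vec -> C) (x : Vec),
     inD0 N1 k m eta1 x -> K_good n hbar t1 x -> M_good N1 m hbar eta1 (chartD0 N1 k m x) ->
     restr_act N1 k m hbar (Koornwinder_op n hbar t0 t1 tn u0 un) F x =
     Cadd (Cmul (Cinv (Cmul t0 tn)) (genK_act N1 m hbar eta1 a b c d F (chartD0 N1 k m x)))
          (Cmul (kappa_t n t0 t1 tn) (F (chartD0 N1 k m x)))).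
Proof.
  intros Hk Hm Hn Hh Hp Ht0 Htn Hu0 Hun N1 t1 q a b c d.
  split.
  - exists (wx n k m eta1 hbar). split; [|split].
    + exact (wx_D0 n k m eta1 hbar Hk Hm Hn).
    + exact (wx_Kgood n k m eta1 hbar Hk Hm Hn Hh Hp).
    + exact (wx_Mgood n k m eta1 hbar Hk Hm Hn Hh Hp).
  - intros F x HD HK HM.
    exact (main_id n k m eta1 hbar x Hk Hm Hn Hh HD HK t0 tn u0 un Hu0 Hun HM F).
Qed.
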